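(* Let $q$ be a prime, $m\in\mathbb Z$, $n\in\mathbb N$ with $\gcd(m,n)=1$, and let $\Phi_q:\mathbb Z\to\mathbb F_q$ be the quotient map; when $q\nmid n$, let $[m/n]_q\in\mathbb F_q$ be the element with $\Phi_q(n)[m/n]_q=\Phi_q(m)$. All convergences below are in $\mathbb A$. (b) The sets $U_{\mathbb R}$, $U_q$ and $\mu_{\mathbb Z(q)}(\mathbb F_q)\cup U_q$ are open in $\mathbb A^{\min}$. (c) The subspaces $\mu_{\mathbb Q_0}(\mathbb Q)$ and $\bigcup_{p}\mu_{\mathbb Z(p)}(\mathbb F_p)$ are discrete. (d) Let $(p_i,\omega_i)_{i\in\mathbb N}$ be a sequence in $\{\text{primes}\}\times(0,\infty)$ and $s_i\in\mathbb Q_{p_i}$. Then $\mu_{\mathbb Q_{p_i}^{\omega_i}}(s_i)\to\mu_{\mathbb Z(q)}(\Phi_q(n))$ if and only if $\omega_i\to\infty$ and there is $i_0$ such that for all $i\ge i_0$, $p_i=q$ and $s_i\in n+q\mathbb Z_q$, where $\mathbb Z_q=\{s\in\mathbb Q_q:|s|_q\le1\}$. (e) Let $(p_i,k_i)_{i\in\mathbb N}$ be a sequence in $\{\text{primes}\}\times\mathbb Z$. Then $\mu_{\mathbb Z(p_i)}(\Phi_{p_i}(k_i))\to\mu_{\mathbb Q_0}(m/n)$ if and only if $p_i\to\infty$ and there is $i_0$ with $\Phi_{p_i}(k_i)=[m/n]_{p_i}$ for all $i\ge i_0$. (f) Let $\upsilon_i\in(0,1]$ and $t_i\in\mathbb R$.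 Then $\mu_{\mathbb R_{\upsilon_i}}(t_i)\to\mu_{\mathbb Q_0}(m/n)$ if and only if $\upsilon_i\to0$ and $|t_i-m/n|^{\upsilon_i}\to0$ ($|\cdot|$ Euclidean). (g) Let $(p_i,\omega_i)$ be a sequence in $\{\text{primes}\}\times(0,\infty)$ and $s_i\in\mathbb Q_{p_i}$. Then $\mu_{\mathbb Q_{p_i}^{\omega_i}}(s_i)\to\mu_{\mathbb Q_0}(m/n)$ if and only if $|k|_{p_i}^{\omega_i}\to1$ for every $k\in\mathbb N$ and $|s_i-m/n|_{p_i}^{\omega_i}\to0$.
   Context: $\mathbb A$ is the set of non-zero multiplicative semi-norms on $\mathbb Z[t]$ with the topology of pointwise convergence on $\mathbb Z[t]$. For a complete valuation field $K$ and $s\in K$, $\mu_K(s)\in\mathbb A$ is $p\mapsto|p(s)|_K$. Minimal fields: $\mathbb Q_0$ ($\mathbb Q$ with trivial absolute value), $\mathbb Z(p)$ ($\mathbb F_p$ with trivial absolute value), $\mathbb R_\upsilon$ ($\mathbb R$ with $|x|^\upsilon$, $|\cdot|$ Euclidean, $\upsilon\in(0,1]$), $\mathbb Q_p^\omega$ ($\mathbb Q_p$ with $|x|_p^\omega$, $\omega>0$). $\mathbb A^{\min}$ is the union of $\mu_K(K)$ over all these minimal fields $K$, with the subspace topology from $\mathbb A$; $U_{\mathbb R}:=\bigcup_{\upsilon\in(0,1]}\mu_{\mathbb R_\upsilon}(\mathbb R)$ and $U_q:=\bigcup_{\omega\in(0,\infty)}\mu_{\mathbb Q_q^\omega}(\mathbb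 Q_q)$. *)

(* Defs.v *)
From Stdlib Require Export Reals QArith ZArith Znumtheory List ClassicalEpsilon.
Open Scope R_scope.

(* Elements of Z[t]: coefficient lists, constant coefficient first. *)
Definition poly := list Z.

Fixpoint evalZ (P : poly) (x : Z) : Z :=
  match P with nil => 0%Z | c :: P' => (c + x * evalZ P' x)%Z end.
Fixpoint evalQ (P : poly) (x : Q) : Q :=
  match P with nil => 0%Q | c :: P' => (inject_Z c + x * evalQ P' x)%Q end.
Fixpoint evalR (P : poly) (x : R) : R :=
  match P with nil => 0 | c :: P' => IZR c + x * evalR P' x end.

(* p-adic valuation of a nonzero integer (fuel |z| suffices for p >= 2). *)
Fixpoint vfuel (fuel : nat) (p z : Z) : Z :=
  match fuel with
  | O => 0%Z
  | S f => if Z.eqb z 0 then 0%Z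
           else if Z.eqb (Z.modulo z p) 0 then (1 + vfuel f p (Z.div z p))%Z
           else 0%Z
  end.
Definition vZ (p z : Z) : Z := vfuel (Z.to_nat (Z.abs z)) p z.

Definition padic_abs (p : Z) (x : Q) : R :=
  if Qeq_bool x 0 then 0
  else powerRZ (IZR p) (- (vZ p (Qnum x) - vZ p (Zpos (Qden x))))%Z.

Definition Lim (u : nat -> R) : R := epsilon (inhabits 0) (fun l => Un_cv u l).

(* Q_p is modelled as the completion of Q: an element of Q_p is represented
   by a |.|_p-Cauchy sequence of rationals. *)
Definition padic_cauchy (p : Z) (u : nat -> Q) : Prop :=
  forall eps, eps > 0 -> exists N, forall a b, (N <= a)%nat -> (N <= b)%nat ->
    padic_abs p (u a - u b)%Q < eps.

Definition qp_abs (p : Z) (u : nat -> Q) : R := Lim (fun k => padic_abs p (u k)).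

Definition rpow (x a : R) : R := if Req_EM_T x 0 then 0 else Rpower x a.

Definition seminorm := poly -> R.

Definition mu_Q0 (r : Q) : seminorm :=
  fun P => if Qeq_bool (evalQ P r) 0 then 0 else 1.
Definition mu_Fp (p k : Z) : seminorm :=
  fun P => if Z.eqb (Z.modulo (evalZ P k) p) 0 then 0 else 1.
Definition mu_R (v t : R) : seminorm := fun P => rpow (Rabs (evalR P t)) v.
Definition mu_Qp (p : Z) (w : R) (u : nat -> Q) : seminorm :=
  fun P => rpow (qp_abs p (fun k => evalQ P (u k))) w.

Definition sn_eq (f g : seminorm) : Prop := forall P, f P = g P.

Definition Q0_pts (f : seminorm) : Prop := exists r, sn_eq f (mu_Q0 r).
Definition Fp_pts (p : Z) (f : seminorm) : Prop := exists k, sn_eq f (mu_Fp p k).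
Definition U_R (f : seminorm) : Prop :=
  exists v t, 0 < v <= 1 /\ sn_eq f (mu_R v t).
Definition U_Qp (q : Z) (f : seminorm) : Prop :=
  exists w u, 0 < w /\ padic_cauchy q u /\ sn_eq f (mu_Qp q w u).

Definition Amin (f : seminorm) : Prop :=
  Q0_pts f \/ (exists p, prime p /\ Fp_pts p f) \/ U_R f \/
  (exists p, prime p /\ U_Qp p f).

(* openness in A^min for the subspace topology of pointwise convergence *)
Definition open_in_Amin (U : seminorm -> Prop) : Prop :=
  forall f, U f -> exists (Ps : list poly) (eps : R), 0 < eps /\
    forall g, Amin g -> (forall P, In P Ps -> Rabs (g P - f P) < eps) -> U g.

Definition discrete_subspace (S : seminorm -> Prop) : Prop :=
  forall f, S f -> exists (Ps : list poly) (eps : R), 0 < eps /\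
    forall g, S g -> (forall P, In P Ps -> Rabs (g P - f P) < eps) -> sn_eq g f.

Definition sn_conv (F : nat -> seminorm) (f : seminorm) : Prop :=
  forall P, Un_cv (fun i => F i P) (f P).

Definition in_n_plus_qZq (q n : Z) (u : nat -> Q) : Prop :=
  exists z, padic_cauchy q z /\ qp_abs q z <= 1 /\
    qp_abs q (fun k => u k - (inject_Z n + inject_Z q * z k))%Q = 0.

Definition frac_Q (m : Z) (n : nat) : Q := (inject_Z m / inject_Z (Z.of_nat n))%Q.

(* Main.v *)
Require Import Defs.
From Stdlib Require Import Qreals Qfield Lra Lia Psatz FunctionalExtensionality.
Open Scope R_scope.

Section V1sec.
Local Open Scope Z_scope.

Lemma vfuel_spec : forall fuel p z, (2 <= p)%Z -> z <> 0%Z ->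
  (Z.to_nat (Z.abs z) <= fuel)%nat ->
  (0 <= vfuel fuel p z)%Z /\ exists r, z = (p ^ vfuel fuel p z * r)%Z /\ (r mod p <> 0)%Z.
Proof.
  induction fuel as [|f IH]; intros p z Hp Hz Hf.
  - exfalso. apply Hz. lia.
  - cbn [vfuel]. destruct (Z.eqb_spec z 0) as [E|_]; [contradiction|].
    destruct (Z.eqb_spec (z mod p) 0) as [E|E].
    + assert (Hzp : z = (p * (z / p))%Z) by (apply Z_div_exact_full_2; lia).
      assert (Hq : (z / p) <> 0%Z) by (intro H; rewrite H in Hzp; lia).
      assert (Hlt : (Z.to_nat (Z.abs (z / p)) <= f)%nat).
      { assert (Z.abs z = p * Z.abs (z/p))%Z by (rewrite Hzp at 1; rewrite Z.abs_mul; lia).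
        assert (0 < Z.abs (z/p))%Z by lia. assert (Z.abs (z/p) < Z.abs z) by nia. lia. }
      destruct (IH p (z / p) Hp Hq Hlt) as [H0 [r [Hr Hrm]]].
      split; [lia|]. exists r. split; auto.
      rewrite Z.pow_add_r by lia. rewrite Z.pow_1_r. rewrite Hzp at 1. rewrite Hr at 1. ring.
    + split; [lia|]. exists z. split; auto. rewrite Z.pow_0_r. ring.
Qed.

Lemma vZ_spec : forall p z, (2 <= p)%Z -> z <> 0%Z ->
  (0 <= vZ p z)%Z /\ exists r, z = (p ^ vZ p z * r)%Z /\ (r mod p <> 0)%Z.
Proof. intros. unfold vZ. apply vfuel_spec; auto. Qed.

Lemma pow_uniq : forall p a b r s, (2 <= p)%Z -> (0 <= a)%Z -> (0 <= b)%Z ->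
  (p ^ a * r = p ^ b * s)%Z -> (r mod p <> 0)%Z -> (s mod p <> 0)%Z -> a = b.
Proof.
  intros p a b r s Hp Ha Hb E Hr Hs.
  assert (key : forall a b r s, (0 <= a)%Z -> (a < b)%Z -> (p ^ a * r = p ^ b * s)%Z -> (r mod p <> 0)%Z -> False).
  { clear a b r s Ha Hb E Hr Hs. intros a b r s Ha Hab E Hr. 
    assert (Hb : (p ^ b = p ^ a * (p * p ^ (b - a - 1)))%Z).
    { rewrite <- Z.pow_succ_r by lia. rewrite <- Z.pow_add_r by lia. f_equal. lia. }
    rewrite Hb in E. 
    { assert (p ^ a <> 0)%Z by (apply Z.pow_nonzero; lia).
      assert (r = p * (p ^ (b - a - 1) * s))%Z by nia.
      apply Hr. rewrite H0. rewrite Z.mul_comm. apply Z_mod_mult. } }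
  destruct (Z.lt_trichotomy a b) as [H|[H|H]]; auto.
  - exfalso. exact (key a b r s Ha H E Hr).
  - exfalso. exact (key b a s r Hb H (eq_sym E) Hs).
Qed.

Lemma vZ_char : forall p z k r, (2 <= p)%Z -> (0 <= k)%Z -> z = (p ^ k * r)%Z -> (r mod p <> 0)%Z ->
  vZ p z = k.
Proof.
  intros p z k r Hp Hk Hz Hr.
  assert (z <> 0)%Z. { subst. intro H. apply Z.mul_eq_0 in H. destruct H.
    - revert H. apply Z.pow_nonzero; lia.
    - subst. rewrite Zmod_0_l in Hr. auto. }
  destruct (vZ_spec p z Hp H) as [H0 [s [Hs Hsm]]].
  eapply pow_uniq with (r := s) (s := r); eauto. congruence.
Qed.

Lemma vZ_nonneg : forall p z, (2 <= p)%Z -> (0 <= vZ p z)%Z.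
Proof. intros. destruct (Z.eq_dec z 0). subst. reflexivity. apply vZ_spec; auto. Qed.

Lemma vZ_mul : forall p a b, prime p -> a <> 0%Z -> b <> 0%Z -> vZ p (a * b) = (vZ p a + vZ p b)%Z.
Proof.
  intros p a b Hp Ha Hb. pose proof (prime_ge_2 p Hp) as H2.
  destruct (vZ_spec p a H2 Ha) as [Ha0 [r [Hr Hrm]]].
  destruct (vZ_spec p b H2 Hb) as [Hb0 [s [Hs Hsm]]].
  apply vZ_char with (r := (r * s)%Z); auto; try lia.
  - rewrite Z.pow_add_r by lia. rewrite Hr at 1. rewrite Hs at 1. ring.
  - intro E. apply Z.mod_divide in E; [|lia]. apply prime_mult in E; auto.
    destruct E as [E|E]; apply Z.mod_divide in E; lia.
Qed.

Lemma vZ_pow : forall p k, (2 <= p)%Z -> (0 <= k)%Z -> vZ p (p ^ k) = k.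
Proof. intros. apply vZ_char with (r := 1%Z); auto. ring. rewrite Z.mod_1_l; lia. Qed.

Lemma vZ_one : forall p, (2 <= p)%Z -> vZ p 1 = 0%Z.
Proof. intros. apply vZ_char with (r := 1%Z); auto; try lia. rewrite Z.mod_1_l; lia. Qed.

Lemma vZ_opp : forall p z, prime p -> vZ p (- z) = vZ p z.
Proof.
  intros p z Hp. pose proof (prime_ge_2 p Hp).
  destruct (Z.eq_dec z 0). subst; reflexivity.
  replace (- z)%Z with (-1 * z)%Z by ring. rewrite vZ_mul; auto; try lia.
  assert (Hm : vZ p (-1) = 0).
  { apply (vZ_char p (-1) 0 (-1)); try lia.
    intro E; apply Z.mod_divide in E; [|lia]; destruct E as [k Hk]; destruct (Z.lt_trichotomy k 0) as [?|[?|?]]; nia. }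
  lia.
Qed.

Lemma vZ_div : forall p z, prime p -> z <> 0%Z -> ((p | z) <-> (1 <= vZ p z)%Z).
Proof.
  intros p z Hp Hz. pose proof (prime_ge_2 p Hp).
  destruct (vZ_spec p z H Hz) as [H0 [r [Hr Hrm]]]. split.
  - intros Hd. destruct (Z.eq_dec (vZ p z) 0) as [E|E]; [|lia].
    rewrite E in Hr. rewrite Z.pow_0_r, Z.mul_1_l in Hr. subst r.
    exfalso. apply Hrm. apply Z.mod_divide; auto; lia.
  - intros Hv. rewrite Hr. apply Z.divide_mul_l.
    replace (vZ p z) with (Z.succ (vZ p z - 1)) by lia. rewrite Z.pow_succ_r by lia.
    apply Z.divide_mul_l. apply Z.divide_refl.
Qed.

Lemma vZ_add : forall p a b, prime p -> a <> 0%Z -> b <> 0%Z -> (a + b <> 0)%Z ->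
  (Z.min (vZ p a) (vZ p b) <= vZ p (a + b))%Z.
Proof.
  intros p a b Hp Ha Hb Hab. pose proof (prime_ge_2 p Hp) as H2.
  destruct (vZ_spec p a H2 Ha) as [Ha0 [r [Hr Hrm]]].
  destruct (vZ_spec p b H2 Hb) as [Hb0 [s [Hs Hsm]]].
  set (k := Z.min (vZ p a) (vZ p b)).
  assert (E : (a + b = p ^ k * (p ^ (vZ p a - k) * r + p ^ (vZ p b - k) * s))%Z).
  { rewrite Hr at 1. rewrite Hs at 1.
    replace (vZ p a) with (k + (vZ p a - k))%Z at 1 by lia.
    replace (vZ p b) with (k + (vZ p b - k))%Z at 1 by lia.
    rewrite !Z.pow_add_r by lia. ring. }
  assert (Hne : (p ^ (vZ p a - k) * r + p ^ (vZ p b - k) * s) <> 0%Z).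
  { intro H. rewrite H in E. lia. }
  rewrite E. rewrite vZ_mul; auto. rewrite vZ_pow; auto. pose proof (vZ_nonneg p (p ^ (vZ p a - k) * r + p ^ (vZ p b - k) * s) H2). lia.
  lia. apply Z.pow_nonzero; lia.
Qed.

End V1sec.

Open Scope R_scope.

Definition qv (p : Z) (x : Q) : Z := (vZ p (Qnum x) - vZ p (Zpos (Qden x)))%Z.

Lemma Qeq0_num : forall x, (x == 0)%Q <-> Qnum x = 0%Z.
Proof. intros [n d]. unfold Qeq. simpl. lia. Qed.

Lemma pa_def : forall p x, ~ (x == 0)%Q -> padic_abs p x = powerRZ (IZR p) (- qv p x).
Proof.
  intros p x H. unfold padic_abs. destruct (Qeq_bool x 0) eqn:E.
  - apply Qeq_bool_iff in E. contradiction.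
  - reflexivity.
Qed.

Lemma pa_zero : forall p x, (x == 0)%Q -> padic_abs p x = 0.
Proof. intros p x H. unfold padic_abs. apply Qeq_bool_iff in H. rewrite H. reflexivity. Qed.

Section P.
Variable p : Z.
Hypothesis Hp : prime p.

Lemma p2 : (2 <= p)%Z. Proof. apply prime_ge_2; auto. Qed.
Lemma pR : 2 <= IZR p. Proof. apply IZR_le. apply p2. Qed.

Lemma pw_lt : forall a b, (a < b)%Z -> powerRZ (IZR p) a < powerRZ (IZR p) b.
Proof. intros. pose proof pR. rewrite !powerRZ_Rpower by lra. apply Rpower_lt. lra. apply IZR_lt; auto. Qed.
Lemma pw_le : forall a b, (a <= b)%Z -> powerRZ (IZR p) a <= powerRZ (IZR p) b.
Proof. intros. destruct (Z.eq_dec a b). subst; lra. left; apply pw_lt; lia. Qed.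
Lemma pw_lt_inv : forall a b, powerRZ (IZR p) a < powerRZ (IZR p) b -> (a < b)%Z.
Proof. intros. destruct (Z_lt_le_dec a b); auto. apply pw_le in l. lra. Qed.
Lemma pw_m1 : powerRZ (IZR p) (-1) = / IZR p.
Proof. simpl. rewrite Rmult_1_r. reflexivity. Qed.
Lemma pw_pos : forall a, 0 < powerRZ (IZR p) a.
Proof. intros. apply powerRZ_lt. pose proof pR. lra. Qed.

Lemma qv_compat : forall x y, x == y -> ~ (x == 0)%Q -> qv p x = qv p y.
Proof.
  intros [a b] [c d] E Hx. unfold Qeq in E. simpl in *. unfold qv. simpl.
  assert (a <> 0%Z) by (intro; apply Hx; unfold Qeq; simpl; lia).
  assert (c <> 0%Z) by (intro; subst; simpl in E; lia).
  assert (vZ p (a * Zpos d) = vZ p (c * Zpos b)) by (rewrite E; auto).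
  rewrite !vZ_mul in H1 by (auto; lia). lia.
Qed.

Lemma qv_mul : forall x y, ~ (x == 0)%Q -> ~ (y == 0)%Q -> qv p (x * y) = (qv p x + qv p y)%Z.
Proof.
  intros [a b] [c d] Hx Hy. 
  assert (a <> 0%Z) by (intro; apply Hx; unfold Qeq; simpl; lia).
  assert (c <> 0%Z) by (intro; apply Hy; unfold Qeq; simpl; lia).
  unfold qv, Qmult. simpl. rewrite Pos2Z.inj_mul. rewrite !vZ_mul by (auto; lia). lia.
Qed.

Lemma qv_add : forall x y, ~ (x == 0)%Q -> ~ (y == 0)%Q -> ~ ((x + y) == 0)%Q ->
  (Z.min (qv p x) (qv p y) <= qv p (x + y))%Z.
Proof.
  intros [a b] [c d] Hx Hy Hxy.
  assert (a <> 0%Z) by (intro; apply Hx; unfold Qeq; simpl; lia).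
  assert (c <> 0%Z) by (intro; apply Hy; unfold Qeq; simpl; lia).
  assert (a * Zpos d + c * Zpos b <> 0)%Z by (intro E; apply Hxy; unfold Qeq, Qplus; simpl; lia).
  unfold qv, Qplus in *. simpl in *. rewrite Pos2Z.inj_mul. rewrite vZ_mul by (auto; lia).
  pose proof (vZ_add p (a * Zpos d) (c * Zpos b) Hp ltac:(lia) ltac:(lia) H1).
  rewrite !vZ_mul in H2 by (auto; lia). lia.
Qed.

Lemma qv_opp : forall x, qv p (- x) = qv p x.
Proof. intros [a b]. unfold qv. simpl. rewrite vZ_opp; auto. Qed.

Lemma qv_int : forall z, qv p (inject_Z z) = vZ p z.
Proof. intros. unfold qv. simpl. rewrite vZ_one by apply p2. lia. Qed.

Lemma pa_nonneg : forall x, 0 <= padic_abs p x.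
Proof. intros. destruct (Qeq_dec x 0). rewrite pa_zero; auto; lra. rewrite pa_def; auto. left; apply pw_pos. Qed.

Lemma pa_pos : forall x, ~ (x == 0)%Q -> 0 < padic_abs p x.
Proof. intros. rewrite pa_def; auto. apply pw_pos. Qed.

Lemma pa_eq0 : forall x, padic_abs p x = 0 -> (x == 0)%Q.
Proof. intros. destruct (Qeq_dec x 0); auto. pose proof (pa_pos x n). lra. Qed.

Lemma pa_compat : forall x y, x == y -> padic_abs p x = padic_abs p y.
Proof.
  intros. destruct (Qeq_dec x 0).
  - rewrite !pa_zero; auto. rewrite <- H; auto.
  - assert (~ (y == 0)%Q) by (rewrite <- H; auto). rewrite !pa_def; auto. rewrite (qv_compat x y); auto.
Qed.

Lemma pa_mul : forall x y, padic_abs p (x * y) = padic_abs p x * padic_abs p y.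
Proof.
  intros. destruct (Qeq_dec x 0).
  - rewrite (pa_zero p x), pa_zero; auto. lra. rewrite q; ring.
  - destruct (Qeq_dec y 0).
    + rewrite (pa_zero p y), pa_zero; auto. lra. rewrite q; ring.
    + assert (~ (x * y == 0)%Q). { intro E. apply Qmult_integral in E. tauto. }
      rewrite !pa_def; auto. rewrite qv_mul; auto. rewrite <- powerRZ_add. f_equal. lia.
      pose proof pR. lra.
Qed.

Lemma pa_opp : forall x, padic_abs p (- x) = padic_abs p x.
Proof.
  intros. destruct (Qeq_dec x 0).
  - rewrite !pa_zero; auto. rewrite q; reflexivity.
  - assert (~ (- x == 0)%Q). { intro E. apply n. rewrite <- (Qopp_involutive x). rewrite E. reflexivity. }
    rewrite !pa_def; auto. rewrite qv_opp. auto.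
Qed.

Lemma pa_ultra : forall x y, padic_abs p (x + y) <= Rmax (padic_abs p x) (padic_abs p y).
Proof.
  intros. destruct (Qeq_dec x 0).
  - rewrite (pa_compat (x + y) y). rewrite (pa_zero p x); auto. apply Rmax_r. rewrite q; ring.
  - destruct (Qeq_dec y 0).
    + rewrite (pa_compat (x + y) x). apply Rmax_l. rewrite q; ring.
    + destruct (Qeq_dec (x + y) 0).
      * rewrite pa_zero; auto. pose proof (pa_nonneg x). eapply Rle_trans; [apply H|apply Rmax_l].
      * rewrite !pa_def; auto. pose proof (qv_add x y n n0 n1).
        destruct (Z.le_ge_cases (qv p x) (qv p y)).
        -- eapply Rle_trans; [|apply Rmax_l]. apply pw_le. lia.
        -- eapply Rle_trans; [|apply Rmax_r]. apply pw_le. lia.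
Qed.

Lemma pa_tri : forall x y, padic_abs p (x + y) <= padic_abs p x + padic_abs p y.
Proof.
  intros. pose proof (pa_ultra x y). pose proof (pa_nonneg x). pose proof (pa_nonneg y).
  unfold Rmax in H. destruct (Rle_dec _ _); lra.
Qed.

Lemma pa_minus_tri : forall x y, Rabs (padic_abs p x - padic_abs p y) <= padic_abs p (x - y).
Proof.
  intros. 
  assert (padic_abs p x <= padic_abs p (x - y) + padic_abs p y).
  { rewrite <- (pa_tri (x - y) y). right. apply pa_compat. ring. }
  assert (padic_abs p y <= padic_abs p (x - y) + padic_abs p x).
  { rewrite <- (pa_opp (x - y)). rewrite <- (pa_tri (- (x - y)) x). right. apply pa_compat. ring. }
  apply Rabs_le. lra.
Qed.

Lemma pa_strict : forall x y, padic_abs p y < padic_abs p x -> padic_abs p (x + y) = padic_abs p x.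
Proof.
  intros. pose proof (pa_ultra x y).
  pose proof (pa_ultra (x + y) (- y)) as H1. rewrite pa_opp in H1.
  rewrite (pa_compat (x + y + - y) x) in H1 by ring.
  unfold Rmax in *. destruct (Rle_dec (padic_abs p x) (padic_abs p y)); [lra|].
  destruct (Rle_dec (padic_abs p (x + y)) (padic_abs p y)); lra.
Qed.

Lemma pa_int_le1 : forall z, padic_abs p (inject_Z z) <= 1.
Proof.
  intros. destruct (Qeq_dec (inject_Z z) 0). rewrite pa_zero; auto; lra.
  rewrite pa_def; auto. rewrite qv_int. replace 1 with (powerRZ (IZR p) 0) by reflexivity.
  apply pw_le. pose proof (vZ_nonneg p z p2). lia.
Qed.

Lemma injZ0 : forall z, (inject_Z z == 0)%Q <-> z = 0%Z.
Proof. intros. unfold Qeq. simpl. lia. Qed.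

Lemma pa_int_unit : forall z, (z mod p <> 0)%Z -> padic_abs p (inject_Z z) = 1.
Proof.
  intros. assert (z <> 0%Z) by (intro; subst; apply H; auto).
  rewrite pa_def by (rewrite injZ0; auto). rewrite qv_int.
  assert (vZ p z = 0%Z).
  { pose proof (vZ_nonneg p z p2). destruct (Z.eq_dec (vZ p z) 0); auto.
    exfalso. apply H. apply Z.mod_divide. pose proof p2; lia. apply vZ_div; auto; lia. }
  rewrite H1. reflexivity.
Qed.

Lemma pa_int_div : forall z, (z mod p = 0)%Z -> padic_abs p (inject_Z z) <= / IZR p.
Proof.
  intros. destruct (Z.eq_dec z 0).
  - subst. rewrite pa_zero by reflexivity. pose proof pR. left. apply Rinv_0_lt_compat. lra.
  - rewrite pa_def by (rewrite injZ0; auto). rewrite qv_int.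
    assert (1 <= vZ p z)%Z. { apply vZ_div; auto. apply Z.mod_divide; auto. pose proof p2; lia. }
    rewrite <- pw_m1. apply pw_le. lia.
Qed.

Lemma pa_p : padic_abs p (inject_Z p) = / IZR p.
Proof.
  rewrite pa_def. rewrite qv_int. rewrite (vZ_char p p 1 1). apply pw_m1. apply p2. lia. ring.
  rewrite Z.mod_1_l; pose proof p2; lia. rewrite injZ0. pose proof p2; lia.
Qed.

Lemma pa_lt1 : forall x, padic_abs p x < 1 -> padic_abs p x <= / IZR p.
Proof.
  intros. destruct (Qeq_dec x 0).
  - rewrite pa_zero; auto. pose proof pR. left. apply Rinv_0_lt_compat. lra.
  - rewrite pa_def in *; auto. replace 1 with (powerRZ (IZR p) 0) in H by reflexivity.
    apply pw_lt_inv in H. rewrite <- pw_m1.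
    apply pw_le. lia.
Qed.

End P.

Open Scope R_scope.

Lemma Lim_eq : forall u l, Un_cv u l -> Lim u = l.
Proof.
  intros u l H. unfold Lim. 
  assert (E : exists l, Un_cv u l) by (exists l; auto).
  pose proof (epsilon_spec (inhabits 0) (fun l => Un_cv u l) E). simpl in H0.
  eapply UL_sequence; eauto.
Qed.

Lemma cv_eventually_le : forall a l c, Un_cv a l -> (exists K, forall k, (K <= k)%nat -> a k <= c) -> l <= c.
Proof.
  intros a l c H [K HK]. destruct (Rle_dec l c); auto. exfalso.
  destruct (H (l - c)) as [N HN]. lra.
  specialize (HN (max N K) ltac:(lia)). specialize (HK (max N K) ltac:(lia)).
  unfold R_dist in HN. apply Rabs_def2 in HN. lra.
Qed.

Lemma cv_eventually_ge : forall a l c, Un_cv a l -> (exists K, forall k, (K <= k)%nat -> c <= a k) -> c <= l.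
Proof.
  intros a l c H [K HK]. destruct (Rle_dec c l); auto. exfalso.
  destruct (H (c - l)) as [N HN]. lra.
  specialize (HN (max N K) ltac:(lia)). specialize (HK (max N K) ltac:(lia)).
  unfold R_dist in HN. apply Rabs_def2 in HN. lra.
Qed.

Lemma cv_lt_eventually : forall a l c, Un_cv a l -> l < c -> exists K, forall k, (K <= k)%nat -> a k < c.
Proof.
  intros a l c H Hl. destruct (H (c - l)) as [N HN]. lra. exists N. intros k Hk.
  specialize (HN k Hk). unfold R_dist in HN. apply Rabs_def2 in HN. lra.
Qed.

Lemma cv_gt_eventually : forall a l c, Un_cv a l -> c < l -> exists K, forall k, (K <= k)%nat -> c < a k.
Proof.
  intros a l c H Hl. destruct (H (l - c)) as [N HN]. lra. exists N. intros k Hk.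
  specialize (HN k Hk). unfold R_dist in HN. apply Rabs_def2 in HN. lra.
Qed.

Lemma cv_eventually_const : forall a c, (exists K, forall k, (K <= k)%nat -> a k = c) -> Un_cv a c.
Proof.
  intros a c [K HK] eps He. exists K. intros k Hk. rewrite HK; auto. unfold R_dist. 
  rewrite Rminus_diag, Rabs_R0. auto.
Qed.

Lemma cv_Rmax : forall a b A B, Un_cv a A -> Un_cv b B -> Un_cv (fun k => Rmax (a k) (b k)) (Rmax A B).
Proof.
  intros a b A B Ha Hb eps He.
  destruct (Ha eps He) as [N1 H1]. destruct (Hb eps He) as [N2 H2].
  exists (max N1 N2). intros k Hk. specialize (H1 k ltac:(lia)). specialize (H2 k ltac:(lia)).
  unfold R_dist in *. apply Rabs_def2 in H1. apply Rabs_def2 in H2. apply Rabs_def1;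
  unfold Rmax; repeat destruct Rle_dec; lra.
Qed.

Lemma cv_ext : forall a b l, (forall k, a k = b k) -> Un_cv a l -> Un_cv b l.
Proof. intros a b l E H eps He. destruct (H eps He) as [N HN]. exists N. intros. rewrite <- E. auto. Qed.

Lemma cv_squeeze0 : forall a b, (forall k, 0 <= a k <= b k) -> Un_cv b 0 -> Un_cv a 0.
Proof.
  intros a b Hab H eps He. destruct (H eps He) as [N HN]. exists N. intros k Hk.
  specialize (HN k Hk). specialize (Hab k). unfold R_dist in *. rewrite Rminus_0_r in *.
  rewrite Rabs_right in * by lra. lra.
Qed.

Section P.
Variable p : Z.
Hypothesis Hp : prime p.

Lemma cauchy_abs_cv : forall u, padic_cauchy p u -> Un_cv (fun k => padic_abs p (u k)) (qp_abs p u).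
Proof.
  intros u Hu. 
  assert (Cauchy_crit (fun k => padic_abs p (u k))).
  { intros eps He. destruct (Hu eps He) as [N HN]. exists N. intros a b Ha Hb.
    unfold R_dist. eapply Rle_lt_trans. apply pa_minus_tri; auto. apply HN; auto. }
  destruct (R_complete _ H) as [l Hl]. unfold qp_abs. rewrite (Lim_eq _ l); auto.
Qed.

Lemma qp_abs_nonneg : forall u, padic_cauchy p u -> 0 <= qp_abs p u.
Proof.
  intros. apply (cv_eventually_ge _ _ _ (cauchy_abs_cv u H)). exists O. intros. apply pa_nonneg; auto.
Qed.

Lemma qp_abs_ext : forall u v, (forall k, (u k == v k)%Q) -> qp_abs p u = qp_abs p v.
Proof.
  intros. unfold qp_abs. f_equal. apply functional_extensionality. intros. apply pa_compat; auto.
Qed.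

Lemma qp_abs_const : forall c, qp_abs p (fun _ => c) = padic_abs p c.
Proof. intros. unfold qp_abs. apply Lim_eq. apply cv_eventually_const. exists O. auto. Qed.

Lemma qp_abs_eventually : forall u c, (exists K, forall k, (K <= k)%nat -> padic_abs p (u k) = c) -> qp_abs p u = c.
Proof. intros. unfold qp_abs. apply Lim_eq. apply cv_eventually_const. auto. Qed.

Lemma qp_abs_le : forall u c, padic_cauchy p u -> (exists K, forall k, (K <= k)%nat -> padic_abs p (u k) <= c) -> qp_abs p u <= c.
Proof. intros. apply (cv_eventually_le _ _ _ (cauchy_abs_cv u H)); auto. Qed.

Lemma qp_abs_lt : forall u c, padic_cauchy p u -> qp_abs p u < c -> exists K, forall k, (K <= k)%nat -> padic_abs p (u k) < c.
Proof. intros. apply (cv_lt_eventually _ _ _ (cauchy_abs_cv u H)); auto. Qed.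

Lemma qp_abs_gt : forall u c, padic_cauchy p u -> c < qp_abs p u -> exists K, forall k, (K <= k)%nat -> c < padic_abs p (u k).
Proof. intros. apply (cv_gt_eventually _ _ _ (cauchy_abs_cv u H)); auto. Qed.

Lemma cauchy_const : forall c, padic_cauchy p (fun _ => c).
Proof. intros c eps He. exists O. intros. rewrite pa_zero. auto. ring. Qed.

Lemma cauchy_ext : forall u v, (forall k, (u k == v k)%Q) -> padic_cauchy p u -> padic_cauchy p v.
Proof.
  intros u v E H eps He. destruct (H eps He) as [N HN]. exists N. intros a b Ha Hb.
  rewrite <- (pa_compat p Hp (u a - u b)). auto. rewrite !E. reflexivity.
Qed.

Lemma cauchy_add : forall u v, padic_cauchy p u -> padic_cauchy p v -> padic_cauchy p (fun k => u k + v k)%Q.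
Proof.
  intros u v Hu Hv eps He. destruct (Hu (eps/2)) as [N1 H1]. lra. destruct (Hv (eps/2)) as [N2 H2]. lra.
  exists (max N1 N2). intros a b Ha Hb.
  rewrite (pa_compat p Hp _ ((u a - u b) + (v a - v b))%Q) by ring.
  eapply Rle_lt_trans. apply pa_tri; auto. specialize (H1 a b ltac:(lia) ltac:(lia)). specialize (H2 a b ltac:(lia) ltac:(lia)). lra.
Qed.

Lemma cauchy_opp : forall u, padic_cauchy p u -> padic_cauchy p (fun k => - u k)%Q.
Proof.
  intros u Hu eps He. destruct (Hu eps He) as [N H1]. exists N. intros a b Ha Hb.
  rewrite (pa_compat p Hp _ (- (u a - u b))%Q) by ring. rewrite pa_opp; auto.
Qed.

Lemma cauchy_bounded : forall u, padic_cauchy p u -> exists N B, 0 < B /\ forall a, (N <= a)%nat -> padic_abs p (u a) <= B.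
Proof.
  intros u Hu. destruct (Hu 1) as [N HN]. lra. exists N, (padic_abs p (u N) + 1). split.
  pose proof (pa_nonneg p Hp (u N)). lra.
  intros a Ha. rewrite (pa_compat p Hp _ ((u a - u N) + u N)%Q) by ring.
  eapply Rle_trans. apply pa_tri; auto. specialize (HN a N Ha (le_n _)). lra.
Qed.

Lemma cauchy_mul : forall u v, padic_cauchy p u -> padic_cauchy p v -> padic_cauchy p (fun k => u k * v k)%Q.
Proof.
  intros u v Hu Hv eps He.
  destruct (cauchy_bounded u Hu) as [N1 [B1 [HB1 HN1]]].
  destruct (cauchy_bounded v Hv) as [N2 [B2 [HB2 HN2]]].
  set (d := eps / (B1 + B2 + 1)).
  assert (Hd : 0 < d) by (unfold d; apply Rdiv_lt_0_compat; lra).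
  destruct (Hu d Hd) as [N3 H3]. destruct (Hv d Hd) as [N4 H4].
  exists (max (max N1 N2) (max N3 N4)). intros a b Ha Hb.
  rewrite (pa_compat p Hp _ (u a * (v a - v b) + (u a - u b) * v b)%Q) by ring.
  eapply Rle_lt_trans. apply pa_tri; auto. rewrite !pa_mul; auto.
  specialize (H3 a b ltac:(lia) ltac:(lia)). specialize (H4 a b ltac:(lia) ltac:(lia)).
  specialize (HN1 a ltac:(lia)). specialize (HN2 b ltac:(lia)).
  pose proof (pa_nonneg p Hp (u a)). pose proof (pa_nonneg p Hp (v b)).
  pose proof (pa_nonneg p Hp (v a - v b)). pose proof (pa_nonneg p Hp (u a - u b)).
  apply Rle_lt_trans with (B1 * d + d * B2).
  - apply Rplus_le_compat; apply Rmult_le_compat; lra.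
  - assert (d * (B1 + B2 + 1) = eps) by (unfold d; field; lra). nra.
Qed.

Lemma cauchy_poly : forall P u, padic_cauchy p u -> padic_cauchy p (fun k => evalQ P (u k)).
Proof.
  induction P as [|c P IH]; intros u Hu; simpl.
  - apply cauchy_const.
  - apply (cauchy_add (fun _ => inject_Z c) (fun k => u k * evalQ P (u k))%Q).
    apply cauchy_const. apply cauchy_mul; auto.
Qed.

Lemma qp_abs_mul : forall u v, padic_cauchy p u -> padic_cauchy p v ->
  qp_abs p (fun k => u k * v k)%Q = qp_abs p u * qp_abs p v.
Proof.
  intros. unfold qp_abs at 1. apply Lim_eq.
  apply cv_ext with (fun k => padic_abs p (u k) * padic_abs p (v k)).
  intros; rewrite pa_mul; auto. apply CV_mult; apply cauchy_abs_cv; auto.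
Qed.

Lemma qp_abs_ultra : forall u v, padic_cauchy p u -> padic_cauchy p v ->
  qp_abs p (fun k => u k + v k)%Q <= Rmax (qp_abs p u) (qp_abs p v).
Proof.
  intros. eapply Rle_cv_lim. 2: apply cauchy_abs_cv; apply cauchy_add; auto.
  2: apply cv_Rmax; apply cauchy_abs_cv; auto.
  intros. simpl. apply pa_ultra; auto.
Qed.

Lemma poly_bound : forall P x C, 1 <= C -> padic_abs p x <= C -> padic_abs p (evalQ P x) <= C ^ length P.
Proof.
  induction P as [|c P IH]; intros x C HC Hx; simpl.
  - rewrite pa_zero; auto. lra. reflexivity.
  - eapply Rle_trans. apply pa_ultra; auto. rewrite pa_mul by auto.
    specialize (IH x C HC Hx). pose proof (pa_int_le1 p Hp c).
    pose proof (pa_nonneg p Hp x). pose proof (pa_nonneg p Hp (evalQ P x)).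
    assert (1 <= C ^ length P) by (apply pow_R1_Rle; lra).
    apply Rmax_lub. nra. apply Rmult_le_compat; lra.
Qed.

Lemma poly_lip : forall P x c C, 1 <= C -> padic_abs p x <= C -> padic_abs p c <= C ->
  padic_abs p (evalQ P x - evalQ P c) <= C ^ length P * padic_abs p (x - c).
Proof.
  induction P as [|a P IH]; intros x c C HC Hx Hc; simpl.
  - rewrite pa_zero; auto. pose proof (pa_nonneg p Hp (x - c)). nra. ring.
  - rewrite (pa_compat p Hp _ ((x - c) * evalQ P x + c * (evalQ P x - evalQ P c))%Q) by ring.
    eapply Rle_trans. apply pa_ultra; auto. rewrite !pa_mul by auto.
    specialize (IH x c C HC Hx Hc). pose proof (poly_bound P x C HC Hx).
    pose proof (pa_nonneg p Hp x). pose proof (pa_nonneg p Hp (evalQ P x)).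
    pose proof (pa_nonneg p Hp c). pose proof (pa_nonneg p Hp (x - c)).
    pose proof (pa_nonneg p Hp (evalQ P x - evalQ P c)).
    assert (1 <= C ^ length P) by (apply pow_R1_Rle; lra).
    apply Rmax_lub.
    + rewrite Rmult_comm. apply Rmult_le_compat_r; auto. nra.
    + apply Rle_trans with (C * (C ^ length P * padic_abs p (x - c))). apply Rmult_le_compat; lra.
      right; ring.
Qed.

End P.

Open Scope R_scope.

Lemma Rpower_pos : forall x a, 0 < Rpower x a.
Proof. intros. unfold Rpower. apply exp_pos. Qed.

Lemma rpow_0 : forall w, rpow 0 w = 0.
Proof. intros. unfold rpow. destruct (Req_EM_T 0 0); [auto|congruence]. Qed.

Lemma rpow_pos_eq : forall x w, 0 < x -> rpow x w = Rpower x w.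
Proof. intros. unfold rpow. destruct (Req_EM_T x 0); [lra|auto]. Qed.

Lemma rpow_nonneg : forall x w, 0 <= rpow x w.
Proof. intros. unfold rpow. destruct (Req_EM_T x 0). lra. left; apply Rpower_pos. Qed.

Lemma rpow_pos : forall x w, 0 < x -> 0 < rpow x w.
Proof. intros. rewrite rpow_pos_eq; auto. apply Rpower_pos. Qed.

Lemma rpow_1 : forall w, rpow 1 w = 1.
Proof. intros. rewrite rpow_pos_eq by lra. unfold Rpower. rewrite ln_1, Rmult_0_r. apply exp_0. Qed.

Lemma rpow_mult : forall x y w, 0 <= x -> 0 <= y -> rpow (x * y) w = rpow x w * rpow y w.
Proof.
  intros. destruct H. destruct H0.
  - rewrite !rpow_pos_eq; auto. rewrite Rpower_mult_distr; auto. apply Rmult_lt_0_compat; auto.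
  - subst. rewrite Rmult_0_r, rpow_0. ring.
  - subst. rewrite Rmult_0_l, rpow_0. ring.
Qed.

Lemma rpow_le : forall x y w, 0 <= w -> 0 <= x <= y -> rpow x w <= rpow y w.
Proof.
  intros. destruct H0 as [[H0|H0] H1].
  - rewrite !rpow_pos_eq by lra. apply Rle_Rpower_l; lra.
  - subst. rewrite rpow_0. apply rpow_nonneg.
Qed.

Lemma rpow_lt : forall x y w, 0 < w -> 0 <= x < y -> rpow x w < rpow y w.
Proof.
  intros. destruct H0 as [[H0|H0] H1].
  - rewrite !rpow_pos_eq by lra. apply Rlt_Rpower_l; lra.
  - subst. rewrite rpow_0. apply rpow_pos. lra.
Qed.

Lemma rpow_lt_inv : forall x y w, 0 < w -> 0 <= x -> 0 <= y -> rpow x w < rpow y w -> x < y.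
Proof.
  intros. destruct (Rlt_le_dec x y); auto. pose proof (rpow_le y x w ltac:(lra) ltac:(lra)). lra.
Qed.

Lemma rpow_inv : forall x w, 0 < x -> rpow (/ x) w = / rpow x w.
Proof.
  intros. rewrite !rpow_pos_eq; auto. unfold Rpower. rewrite ln_Rinv by auto.
  rewrite <- exp_Ropp. f_equal. ring. apply Rinv_0_lt_compat; auto.
Qed.

Lemma Rpower_lt_inv : forall c a b, 1 < c -> Rpower c a < Rpower c b -> a < b.
Proof.
  intros. destruct (Rlt_le_dec a b); auto. pose proof (Rle_Rpower c b a ltac:(lra) r). lra.
Qed.

Lemma exp_cont0 : forall u, Un_cv u 0 -> Un_cv (fun i => exp (u i)) 1.
Proof.
  intros. rewrite <- exp_0. apply continuity_seq; auto.
  apply derivable_continuous_pt. apply derivable_pt_exp.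
Qed.

Lemma cv_const : forall c, Un_cv (fun _ => c) c.
Proof. intros. apply cv_eventually_const. exists O. auto. Qed.

Lemma Rpower_cv1 : forall c v, 0 < c -> Un_cv v 0 -> Un_cv (fun i => Rpower c (v i)) 1.
Proof.
  intros. unfold Rpower. apply exp_cont0. 
  replace 0 with (0 * ln c) by ring. apply CV_mult; auto. apply cv_const.
Qed.

Lemma Rpower_cv1_inv : forall c v, 1 < c -> Un_cv (fun i => Rpower c (v i)) 1 -> Un_cv v 0.
Proof.
  intros c v Hc H eps He.
  assert (A0 : Rpower c (- eps) < 1). { rewrite <- (Rpower_O c) by lra. apply Rpower_lt; lra. }
  assert (A1 : 1 < Rpower c eps). { rewrite <- (Rpower_O c) at 1 by lra. apply Rpower_lt; lra. }
  destruct (cv_gt_eventually _ _ _ H A0) as [K1 H4].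
  destruct (cv_lt_eventually _ _ _ H A1) as [K2 H3].
  exists (max K1 K2). intros k Hk. specialize (H4 k ltac:(lia)). specialize (H3 k ltac:(lia)).
  apply Rpower_lt_inv in H4; auto. apply Rpower_lt_inv in H3; auto.
  unfold R_dist. rewrite Rminus_0_r. apply Rabs_def1; lra.
Qed.

Lemma cv_squeeze : forall a b c l, (exists K, forall k, (K <= k)%nat -> a k <= b k <= c k) ->
  Un_cv a l -> Un_cv c l -> Un_cv b l.
Proof.
  intros a b c l [K HK] Ha Hc eps He. destruct (Ha eps He) as [N1 H1]. destruct (Hc eps He) as [N2 H2].
  exists (max K (max N1 N2)). intros k Hk. specialize (HK k ltac:(lia)).
  specialize (H1 k ltac:(lia)). specialize (H2 k ltac:(lia)). unfold R_dist in *.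
  apply Rabs_def2 in H1. apply Rabs_def2 in H2. apply Rabs_def1; lra.
Qed.

Lemma Rpower_inv_cv0 : forall q w, 1 < q -> (forall i, 0 < w i) ->
  (Un_cv (fun i => rpow (/ q) (w i)) 0 <-> cv_infty w).
Proof.
  intros q w Hq Hw. 
  assert (E : forall a, rpow (/ q) a = Rpower q (- a)).
  { intros. rewrite rpow_pos_eq. unfold Rpower. rewrite ln_Rinv by lra. f_equal. ring.
    apply Rinv_0_lt_compat; lra. }
  assert (lnq : 0 < ln q) by (rewrite <- ln_1; apply ln_increasing; lra).
  split.
  - intros H M. assert (0 < Rpower q (- M)) by apply Rpower_pos.
    destruct (H _ H0) as [N HN]. exists N. intros n Hn. specialize (HN n Hn).
    unfold R_dist in HN. rewrite Rminus_0_r, Rabs_right in HN by (apply Rle_ge, rpow_nonneg).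
    rewrite E in HN. apply Rpower_lt_inv in HN; lra.
  - intros H eps He. destruct (H (- ln eps / ln q)) as [N HN]. exists N. intros n Hn.
    specialize (HN n Hn). unfold R_dist. rewrite Rminus_0_r, Rabs_right by (apply Rle_ge, rpow_nonneg).
    rewrite E. replace eps with (Rpower q (- (- ln eps / ln q))).
    apply Rpower_lt; lra.
    unfold Rpower. replace (- (- ln eps / ln q) * ln q) with (ln eps) by (field; lra). apply exp_ln; auto.
Qed.

Open Scope R_scope.

Lemma evalQ_compat : forall P x y, (x == y)%Q -> (evalQ P x == evalQ P y)%Q.
Proof. induction P; intros; simpl. reflexivity. rewrite (IHP x y H), H. reflexivity. Qed.

Lemma injZ0' : forall z, (inject_Z z == 0)%Q <-> z = 0%Z.
Proof. intros. unfold Qeq. simpl. lia. Qed.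

Lemma Q2R_injZ : forall z, Q2R (inject_Z z) = IZR z.
Proof. intros. unfold Q2R. simpl. field. Qed.

Lemma Q2R_evalQ : forall P r, Q2R (evalQ P r) = evalR P (Q2R r).
Proof.
  induction P; intros; simpl. apply RMicromega.Q2R_0.
  rewrite Q2R_plus, Q2R_mult, IHP, Q2R_injZ. reflexivity.
Qed.

Lemma evalQ_injZ : forall P k, (evalQ P (inject_Z k) == inject_Z (evalZ P k))%Q.
Proof.
  induction P; intros; simpl. reflexivity. rewrite IHP. rewrite inject_Z_plus, inject_Z_mult. reflexivity.
Qed.

Lemma evalZ_mod : forall P a b p, (p | a - b)%Z -> (p | evalZ P a - evalZ P b)%Z.
Proof.
  induction P as [|c P IH]; intros; simpl. exists 0%Z. ring.
  replace (c + a * evalZ P a - (c + b * evalZ P b))%Z with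
    ((a - b) * evalZ P a + b * (evalZ P a - evalZ P b))%Z by ring.
  apply Z.divide_add_r. apply Z.divide_mul_l; auto. apply Z.divide_mul_r. apply IH; auto.
Qed.

(* homogenisation n^len P * P(m/n) as an integer *)
Fixpoint hom (m n : Z) (P : poly) : Z :=
  match P with nil => 0%Z | c :: P' => (c * n ^ Z.of_nat (length (c :: P')) + m * hom m n P')%Z end.

Lemma hom_Q : forall m n P, n <> 0%Z ->
  (inject_Z (hom m n P) == inject_Z (n ^ Z.of_nat (length P)) * evalQ P (inject_Z m / inject_Z n))%Q.
Proof.
  induction P as [|c P IH]; intros Hn; cbn [hom evalQ].
  - simpl. reflexivity.
  - replace (Z.of_nat (length (c :: P))) with (Z.succ (Z.of_nat (length P))) by (simpl length; lia).
    rewrite inject_Z_plus, !inject_Z_mult, IH by auto.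
    rewrite Z.pow_succ_r by lia. rewrite inject_Z_mult.
    field. intro E. apply Hn. rewrite injZ0' in E. exact E.
Qed.

Lemma hom_mod : forall m n k p P, (p | n * k - m)%Z ->
  (p | n ^ Z.of_nat (length P) * evalZ P k - hom m n P)%Z.
Proof.
  induction P as [|c P IH]; intros H; cbn [hom evalZ].
  - exists 0%Z. simpl. ring.
  - replace (Z.of_nat (length (c :: P))) with (Z.succ (Z.of_nat (length P))) by (simpl length; lia).
    rewrite Z.pow_succ_r by lia.
    replace (n * n ^ Z.of_nat (length P) * (c + k * evalZ P k) -
       (c * (n * n ^ Z.of_nat (length P)) + m * hom m n P))%Z with
      (n ^ Z.of_nat (length P) * evalZ P k * (n * k - m) + m * (n ^ Z.of_nat (length P) * evalZ P k - hom m n P))%Z by ring.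
    apply Z.divide_add_r. apply Z.divide_mul_r; auto. apply Z.divide_mul_r; auto.
Qed.

Lemma prime_not_div_pow : forall p n L, prime p -> ~ (p | n)%Z -> ~ (p | n ^ Z.of_nat L)%Z.
Proof.
  intros p n L Hp Hn. induction L.
  - simpl. intro H. apply Z.divide_1_r_abs in H. pose proof (prime_ge_2 p Hp). lia.
  - rewrite Nat2Z.inj_succ, Z.pow_succ_r by lia. intro H. apply prime_mult in H; auto. tauto.
Qed.

Lemma frac_Q_eq : forall m (n : nat), (0 < n)%nat ->
  (inject_Z m == inject_Z (Z.of_nat n) * frac_Q m n)%Q.
Proof.
  intros. unfold frac_Q. field. intro E. rewrite injZ0' in E. lia.
Qed.

Lemma mu_Q0_0 : forall r P, (evalQ P r == 0)%Q -> mu_Q0 r P = 0.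
Proof. intros. unfold mu_Q0. apply Qeq_bool_iff in H. rewrite H. auto. Qed.
Lemma mu_Q0_1 : forall r P, ~ (evalQ P r == 0)%Q -> mu_Q0 r P = 1.
Proof. intros. unfold mu_Q0. destruct (Qeq_bool _ _) eqn:E; auto. apply Qeq_bool_iff in E. tauto. Qed.
Lemma mu_Fp_0 : forall p k P, (p | evalZ P k)%Z -> mu_Fp p k P = 0.
Proof.
  intros. unfold mu_Fp. destruct (Z.eq_dec p 0).
  - subst. destruct H as [z Hz]. rewrite Hz. rewrite Z.mul_0_r, Zmod_0_r. auto.
  - rewrite <- Z.mod_divide in H by auto. apply Z.eqb_eq in H. rewrite H. auto.
Qed.
Lemma mu_Fp_1 : forall p k P, p <> 0%Z -> ~ (p | evalZ P k)%Z -> mu_Fp p k P = 1.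
Proof.
  intros. unfold mu_Fp. destruct (Z.eqb_spec (evalZ P k mod p) 0); auto.
  apply Z.mod_divide in e; auto. tauto.
Qed.
Lemma mu_Fp_div : forall p k P, p <> 0%Z -> mu_Fp p k P = 0 -> (p | evalZ P k)%Z.
Proof.
  intros. destruct (Zdivide_dec p (evalZ P k)); auto. rewrite mu_Fp_1 in H0; auto. lra.
Qed.
Lemma mu_Fp_ndiv : forall p k P, mu_Fp p k P = 1 -> ~ (p | evalZ P k)%Z.
Proof. intros. intro. rewrite mu_Fp_0 in H; auto. lra. Qed.
Lemma mu_Fp_01 : forall p k P, mu_Fp p k P = 0 \/ mu_Fp p k P = 1.
Proof. intros. unfold mu_Fp. destruct (_ =? _)%Z; auto. Qed.
Lemma mu_Q0_01 : forall r P, mu_Q0 r P = 0 \/ mu_Q0 r P = 1.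
Proof. intros. unfold mu_Q0. destruct (Qeq_bool _ _); auto. Qed.
Lemma mu_Q0_zero : forall r P, mu_Q0 r P = 0 -> (evalQ P r == 0)%Q.
Proof. intros. destruct (Qeq_dec (evalQ P r) 0); auto. rewrite mu_Q0_1 in H; auto. lra. Qed.
Lemma mu_Q0_one : forall r P, mu_Q0 r P = 1 -> ~ (evalQ P r == 0)%Q.
Proof. intros. intro. rewrite mu_Q0_0 in H; auto. lra. Qed.

Lemma cv01 : forall a l, (forall i, a i = 0 \/ a i = 1) -> Un_cv a l -> (l = 0 \/ l = 1) ->
  exists K, forall i, (K <= i)%nat -> a i = l.
Proof.
  intros a l H01 H Hl. destruct (H (1/2)) as [N HN]. lra. exists N. intros i Hi.
  specialize (HN i Hi). unfold R_dist in HN. apply Rabs_def2 in HN. destruct (H01 i); destruct Hl; lra.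
Qed.

Lemma fact_div : forall N a, (1 <= a <= N)%nat -> (Z.of_nat a | Z.of_nat (fact N))%Z.
Proof.
  induction N; intros a Ha. lia. change (fact (S N)) with (S N * fact N)%nat. rewrite Nat2Z.inj_mul.
  destruct (Nat.eq_dec a (S N)). subst. apply Z.divide_factor_l.
  apply Z.divide_mul_r. apply IHN. lia.
Qed.

Open Scope R_scope.

Lemma evalQ_lin : forall m (n : nat) x, (0 < n)%nat ->
  (evalQ (-m :: Z.of_nat n :: nil)%Z x == inject_Z (Z.of_nat n) * (x - frac_Q m n))%Q.
Proof.
  intros. simpl. unfold frac_Q. rewrite inject_Z_opp. field. intro E. rewrite injZ0' in E. lia.
Qed.

Lemma part_e (m : Z) (n : nat) (Hn : (0 < n)%nat) :
  forall (p : nat -> Z) (k : nat -> Z),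
     (forall i, prime (p i)) ->
     (sn_conv (fun i => mu_Fp (p i) (k i)) (mu_Q0 (frac_Q m n)) <->
      (cv_infty (fun i => IZR (p i)) /\
       exists i0, forall i, (i0 <= i)%nat ->
         ~ (p i | Z.of_nat n)%Z /\ (p i | Z.of_nat n * k i - m)%Z)).
Proof.
  intros p k Hp.
  assert (Hp0 : forall i, p i <> 0%Z) by (intro i; pose proof (prime_ge_2 _ (Hp i)); lia).
  assert (EV : forall P v, sn_conv (fun i => mu_Fp (p i) (k i)) (mu_Q0 (frac_Q m n)) ->
     mu_Q0 (frac_Q m n) P = v -> (v = 0 \/ v = 1) -> exists K, forall i, (K <= i)%nat -> mu_Fp (p i) (k i) P = v).
  { intros P v H Hv H01. subst v. apply cv01; auto. intros; apply mu_Fp_01. }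
  split.
  - intros H. split.
    + intros M. set (N := Z.to_nat (up M)).
      set (c := Z.of_nat (fact N)).
      assert (Hc : c <> 0%Z) by (unfold c; pose proof (lt_O_fact N); lia).
      destruct (EV (c :: nil) 1 H) as [K HK]; auto.
      { apply mu_Q0_1. simpl. intro E. apply Hc. apply injZ0'. rewrite <- E. ring. }
      exists K. intros i Hi. specialize (HK i Hi). apply mu_Fp_ndiv in HK. simpl in HK.
      rewrite Z.mul_0_r, Z.add_0_r in HK.
      assert (Z.of_nat N < p i)%Z.
      { destruct (Z_lt_le_dec (Z.of_nat N) (p i)); auto. exfalso. apply HK.
        pose proof (prime_ge_2 _ (Hp i)).
        replace (p i) with (Z.of_nat (Z.to_nat (p i))) by lia. apply fact_div. lia. }
      assert (up M <= Z.of_nat N)%Z by (unfold N; lia).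
      apply IZR_lt in H0. apply IZR_le in H1. destruct (archimed M). lra.
    + destruct (EV (Z.of_nat n :: nil) 1 H) as [K1 HK1]; auto.
      { apply mu_Q0_1. simpl. intro E. assert (Z.of_nat n = 0%Z); [|lia]. apply injZ0'. rewrite <- E. ring. }
      destruct (EV (-m :: Z.of_nat n :: nil)%Z 0 H) as [K2 HK2]; auto.
      { apply mu_Q0_0. rewrite evalQ_lin by auto. ring. }
      exists (max K1 K2). intros i Hi. split.
      * specialize (HK1 i ltac:(lia)). apply mu_Fp_ndiv in HK1. simpl in HK1.
        rewrite Z.mul_0_r, Z.add_0_r in HK1. auto.
      * specialize (HK2 i ltac:(lia)). apply mu_Fp_div in HK2; auto. simpl in HK2.
        replace (Z.of_nat n * k i - m)%Z with (- m + k i * (Z.of_nat n + k i * 0))%Z by ring. auto.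
  - intros [Hinf [i0 Hi0]] P.
    set (L := Z.of_nat (length P)).
    destruct (Qeq_dec (evalQ P (frac_Q m n)) 0) as [E|E].
    + rewrite mu_Q0_0 by auto. apply cv_eventually_const. exists i0. intros i Hi.
      destruct (Hi0 i Hi) as [Hd1 Hd2]. apply mu_Fp_0.
      assert (Hh : hom m (Z.of_nat n) P = 0%Z).
      { apply injZ0'. rewrite hom_Q by lia. unfold frac_Q in E. rewrite E. ring. }
      pose proof (hom_mod m (Z.of_nat n) (k i) (p i) P Hd2). rewrite Hh, Z.sub_0_r in H.
      apply prime_mult in H; auto. destruct H; auto. exfalso. apply (prime_not_div_pow _ _ _ (Hp i) Hd1 H).
    + rewrite mu_Q0_1 by auto. apply cv_eventually_const.
      set (h := hom m (Z.of_nat n) P).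
      assert (Hh : h <> 0%Z).
      { intro Z0. apply E. assert (inject_Z h == 0)%Q by (rewrite Z0; reflexivity).
        unfold h in H. rewrite hom_Q in H by lia. apply Qmult_integral in H. destruct H; auto.
        rewrite injZ0' in H. exfalso. revert H. apply Z.pow_nonzero; lia. }
      destruct (Hinf (IZR (Z.abs h))) as [K HK].
      exists (max K i0). intros i Hi. destruct (Hi0 i ltac:(lia)) as [Hd1 Hd2].
      specialize (HK i ltac:(lia)). apply lt_IZR in HK.
      apply mu_Fp_1; auto. intro Hd.
      pose proof (hom_mod m (Z.of_nat n) (k i) (p i) P Hd2).
      assert (p i | h)%Z.
      { replace h with (Z.of_nat n ^ Z.of_nat (length P) * evalZ P (k i) -
           (Z.of_nat n ^ Z.of_nat (length P) * evalZ P (k i) - h))%Z by ring.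
        apply Z.divide_sub_r; auto. apply Z.divide_mul_r; auto. }
      apply Zdivide_bounds in H0; auto. pose proof (prime_ge_2 _ (Hp i)). lia.
Qed.

Open Scope R_scope.

Lemma mu_Q0_compat : forall r r' P, (r == r')%Q -> mu_Q0 r P = mu_Q0 r' P.
Proof.
  intros. destruct (Qeq_dec (evalQ P r) 0).
  - rewrite !mu_Q0_0; auto. rewrite <- (evalQ_compat P r r' H); auto.
  - rewrite !mu_Q0_1; auto. rewrite <- (evalQ_compat P r r' H); auto.
Qed.

Lemma mu_Fp_compat : forall p k k' P, p <> 0%Z -> (p | k' - k)%Z -> mu_Fp p k' P = mu_Fp p k P.
Proof.
  intros. pose proof (evalZ_mod P k' k p H0).
  destruct (Zdivide_dec p (evalZ P k)).
  - rewrite !mu_Fp_0; auto. replace (evalZ P k') with ((evalZ P k' - evalZ P k) + evalZ P k)%Z by ring.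
    apply Z.divide_add_r; auto.
  - rewrite !mu_Fp_1; auto. intro. apply n.
    replace (evalZ P k) with (evalZ P k' - (evalZ P k' - evalZ P k))%Z by ring.
    apply Z.divide_sub_r; auto.
Qed.

Lemma part_c1 : discrete_subspace Q0_pts.
Proof.
  intros f [r Hr]. exists (((- Qnum r)%Z :: Zpos (Qden r) :: nil) :: nil), 1. split. lra.
  intros g [r' Hr'] H. specialize (H _ (or_introl eq_refl)).
  rewrite Hr, Hr' in H.
  assert (E0 : (evalQ (- Qnum r :: Z.pos (Qden r) :: nil)%Z r == 0)%Q).
  { destruct r as [a b]. cbn [evalQ Qnum Qden]. rewrite Qmake_Qdiv, inject_Z_opp. field.
    intro E. rewrite injZ0' in E. lia. }
  rewrite (mu_Q0_0 r) in H by auto.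
  assert (mu_Q0 r' (- Qnum r :: Z.pos (Qden r) :: nil)%Z = 0).
  { destruct (mu_Q0_01 r' (- Qnum r :: Z.pos (Qden r) :: nil)%Z) as [E|E]; auto.
    rewrite E in H. rewrite Rminus_0_r, Rabs_R1 in H. lra. }
  apply mu_Q0_zero in H0.
  assert (Er : (r' == r)%Q).
  { destruct r as [a b]. simpl in H0. rewrite inject_Z_opp in H0.
    assert (r' == ((- inject_Z a + r' * (inject_Z (Z.pos b) + r' * 0)) + inject_Z a) / inject_Z (Zpos b))%Q.
    { field. intro E. rewrite injZ0' in E. lia. }
    rewrite H1, H0. rewrite (Qmake_Qdiv a b). field. intro E. rewrite injZ0' in E. lia. }
  intro P. rewrite Hr, Hr'. apply mu_Q0_compat; auto.
Qed.

Lemma part_c2 : discrete_subspace (fun f => exists p, prime p /\ Fp_pts p f).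
Proof.
  intros f [p [Hp [k Hk]]]. exists ((p :: nil) :: (- k :: 1 :: nil)%Z :: nil), 1. split. lra.
  pose proof (prime_ge_2 p Hp) as Hp2.
  intros g [p' [Hp' [k' Hk']]] H.
  pose proof (H _ (or_introl eq_refl)) as H1. pose proof (H _ (or_intror (or_introl eq_refl))) as H2.
  rewrite Hk, Hk' in H1, H2.
  rewrite (mu_Fp_0 p k) in H1 by (cbn [evalZ]; exists 1%Z; ring).
  rewrite (mu_Fp_0 p k) in H2 by (cbn [evalZ]; exists 0%Z; ring).
  assert (Z1 : forall x, Rabs (x - 0) < 1 -> (x = 0 \/ x = 1) -> x = 0).
  { intros x Hx [Ex|Ex]; subst x; auto. rewrite Rminus_0_r, Rabs_R1 in Hx. lra. }
  apply Z1 in H1; [|apply mu_Fp_01]. apply Z1 in H2; [|apply mu_Fp_01].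
  pose proof (prime_ge_2 p' Hp').
  apply mu_Fp_div in H1; [|lia]. apply mu_Fp_div in H2; [|lia]. simpl in H1, H2.
  rewrite Z.mul_0_r, Z.add_0_r in H1. apply prime_div_prime in H1; auto. subst p'.
  intro P. rewrite Hk, Hk'. apply mu_Fp_compat. lia.
  replace (k' - k)%Z with (- k + k' * (1 + k' * 0))%Z by ring. auto.
Qed.

Lemma mu_Q0_const : forall r c, c <> 0%Z -> mu_Q0 r (c :: nil) = 1.
Proof. intros. apply mu_Q0_1. simpl. intro E. apply H. apply injZ0'. rewrite <- E. ring. Qed.

Lemma mu_Fp_const : forall p k c, p <> 0%Z -> (mu_Fp p k (c :: nil) = 0 /\ (p | c)%Z) \/ (mu_Fp p k (c :: nil) = 1 /\ ~ (p | c)%Z).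
Proof.
  intros. assert (E : evalZ (c :: nil) k = c) by (simpl; ring).
  destruct (Zdivide_dec p c).
  - left. split; auto. apply mu_Fp_0. rewrite E; auto.
  - right. split; auto. apply mu_Fp_1; auto. rewrite E; auto.
Qed.

Lemma mu_R_const : forall v t c, mu_R v t (c :: nil) = rpow (Rabs (IZR c)) v.
Proof. intros. unfold mu_R. simpl. rewrite Rmult_0_r, Rplus_0_r. auto. Qed.

Lemma mu_Qp_const : forall p w u c, prime p -> mu_Qp p w u (c :: nil) = rpow (padic_abs p (inject_Z c)) w.
Proof.
  intros. unfold mu_Qp. f_equal. rewrite (qp_abs_ext p H (fun k => evalQ (c :: nil) (u k)) (fun _ => inject_Z c)).
  apply qp_abs_const; auto. intros. simpl. ring.
Qed.

Lemma key_q : forall q g, prime q -> Amin g -> g (q :: nil) < 1 ->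
  (Fp_pts q g /\ g (q :: nil) = 0) \/ U_Qp q g.
Proof.
  intros q g Hq HA Hlt. pose proof (prime_ge_2 q Hq).
  destruct HA as [[r Hr]|[[p [Hp [k Hk]]]|[[v [t [Hv Ht]]]|[p [Hp [w [u [Hw [Hu Hg]]]]]]]]].
  - rewrite Hr, mu_Q0_const in Hlt by lia. lra.
  - pose proof (prime_ge_2 p Hp). rewrite Hk in *.
    destruct (mu_Fp_const p k q ltac:(lia)) as [[E D]|[E D]]; rewrite E in *; [|lra].
    left. apply prime_div_prime in D; auto. subst. split; auto. exists k; auto.
  - assert (Eq : Rabs (IZR q) = IZR q) by (apply Rabs_right; apply Rle_ge, IZR_le; lia).
    assert (Q1 : 1 < IZR q) by (apply IZR_lt; lia).
    rewrite Ht, mu_R_const, Eq, rpow_pos_eq in Hlt by lra.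
    assert (1 < Rpower (IZR q) v) by (rewrite <- (Rpower_O (IZR q)) by lra; apply Rpower_lt; lra). lra.
  - destruct (Z.eq_dec p q). subst. right. exists w, u. auto.
    exfalso. rewrite Hg, (mu_Qp_const _ _ _ _ Hp) in Hlt. rewrite pa_int_unit in Hlt; auto.
    rewrite rpow_1 in Hlt. lra. intro E. apply Z.mod_divide in E. apply prime_div_prime in E; auto.
    pose proof (prime_ge_2 p Hp). lia.
Qed.

Lemma key_2 : forall g, Amin g -> 1 < g (2%Z :: nil) -> U_R g.
Proof.
  intros g HA Hlt.
  destruct HA as [[r Hr]|[[p [Hp [k Hk]]]|[H|[p [Hp [w [u [Hw [Hu Hg]]]]]]]]]; auto.
  - rewrite Hr, mu_Q0_const in Hlt by lia. lra.
  - pose proof (prime_ge_2 p Hp). rewrite Hk in *.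
    destruct (mu_Fp_const p k 2 ltac:(lia)) as [[E D]|[E D]]; rewrite E in *; lra.
  - rewrite Hg, (mu_Qp_const _ _ _ _ Hp) in Hlt. exfalso.
    assert (rpow (padic_abs p (inject_Z 2)) w <= rpow 1 w). apply rpow_le. lra.
    split. apply pa_nonneg; auto. apply pa_int_le1; auto. rewrite rpow_1 in H. lra.
Qed.

Lemma inIn1 : forall (P : poly) Q, In P (Q :: nil) -> P = Q.
Proof. intros. destruct H; auto. destruct H. Qed.

Lemma part_b1 : open_in_Amin U_R.
Proof.
  intros f [v [t [Hv Ht]]]. exists ((2%Z :: nil) :: nil), (Rpower 2 v - 1). 
  assert (1 < Rpower 2 v). { rewrite <- (Rpower_O 2) by lra. apply Rpower_lt; lra. }
  split. lra. intros g HA H1. apply key_2; auto. specialize (H1 _ (or_introl eq_refl)).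
  rewrite Ht, mu_R_const in H1. rewrite (Rabs_right 2) in H1 by lra.
  rewrite (rpow_pos_eq 2) in H1 by lra. apply Rabs_def2 in H1. lra.
Qed.

Lemma UQp_val : forall q f, prime q -> U_Qp q f -> 0 < f (q :: nil) < 1.
Proof.
  intros q f Hq [w [u [Hw [Hu Hf]]]]. pose proof (prime_ge_2 q Hq).
  rewrite Hf, (mu_Qp_const _ _ _ _ Hq), pa_p by auto. rewrite rpow_inv by (apply IZR_lt; lia).
  assert (1 < rpow (IZR q) w). { rewrite rpow_pos_eq by (apply IZR_lt; lia).
    rewrite <- (Rpower_O (IZR q)) by (apply IZR_lt; lia). apply Rpower_lt; auto. apply IZR_lt; lia. }
  split. apply Rinv_0_lt_compat; lra. rewrite <- Rinv_1. apply Rinv_lt_contravar; lra.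
Qed.

Lemma part_b2 : forall q, prime q -> open_in_Amin (U_Qp q).
Proof.
  intros q Hq f Hf. pose proof (UQp_val q f Hq Hf) as [H0 H1].
  exists ((q :: nil) :: nil), (Rmin (f (q :: nil)) (1 - f (q :: nil))).
  split. apply Rmin_pos; lra. intros g HA H. specialize (H _ (or_introl eq_refl)).
  apply Rabs_def2 in H. pose proof (Rmin_l (f (q :: nil)) (1 - f (q :: nil))).
  pose proof (Rmin_r (f (q :: nil)) (1 - f (q :: nil))).
  destruct (key_q q g Hq HA ltac:(lra)) as [[_ E]|E]; auto. lra.
Qed.

Lemma part_b3 : forall q, prime q -> open_in_Amin (fun f => Fp_pts q f \/ U_Qp q f).
Proof.
  intros q Hq f Hf. pose proof (prime_ge_2 q Hq) as Hq2.
  assert (V : 0 <= f (q :: nil) < 1).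
  { destruct Hf as [[k Hk]|Hf]. rewrite Hk. rewrite mu_Fp_0. lra. simpl. exists 1%Z. ring.
    pose proof (UQp_val q f Hq Hf). lra. }
  exists ((q :: nil) :: nil), (1 - f (q :: nil)). split. lra.
  intros g HA H. specialize (H _ (or_introl eq_refl)). apply Rabs_def2 in H.
  destruct (key_q q g Hq HA ltac:(lra)) as [[E _]|E]; auto.
Qed.

Open Scope R_scope.

Lemma evalR_cv : forall P t r, Un_cv t r -> Un_cv (fun i => evalR P (t i)) (evalR P r).
Proof.
  induction P as [|c P IH]; intros t r H; simpl.
  - apply cv_const.
  - apply CV_plus. apply cv_const. apply CV_mult; auto.
Qed.

Lemma evalR_lip : forall P c, (exists M, 0 <= M /\ forall x, Rabs (x - c) <= 1 -> Rabs (evalR P x) <= M) /\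
  exists L, 0 < L /\ forall x, Rabs (x - c) <= 1 -> Rabs (evalR P x - evalR P c) <= L * Rabs (x - c).
Proof.
  induction P as [|a P IH]; intros c; simpl.
  - split. exists 0. split. lra. intros. rewrite Rabs_R0. lra.
    exists 1. split. lra. intros. rewrite Rminus_0_r, Rabs_R0. pose proof (Rabs_pos (x - c)). lra.
  - destruct (IH c) as [[M [HM HMb]] [L [HL HLb]]]. split.
    + exists (Rabs (IZR a) + (Rabs c + 1) * M). split.
      pose proof (Rabs_pos (IZR a)). pose proof (Rabs_pos c). nra.
      intros x Hx. eapply Rle_trans. apply Rabs_triang. rewrite Rabs_mult.
      apply Rplus_le_compat_l. apply Rmult_le_compat; try apply Rabs_pos; auto.
      replace x with ((x - c) + c) by ring. eapply Rle_trans. apply Rabs_triang. lra.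
    + exists (M + Rabs c * L + 1). split. pose proof (Rabs_pos c). nra.
      intros x Hx. 
      replace (IZR a + x * evalR P x - (IZR a + c * evalR P c)) with
        ((x - c) * evalR P x + c * (evalR P x - evalR P c)) by ring.
      eapply Rle_trans. apply Rabs_triang. rewrite !Rabs_mult.
      specialize (HMb x Hx). specialize (HLb x Hx). pose proof (Rabs_pos (x - c)). pose proof (Rabs_pos c).
      pose proof (Rabs_pos (evalR P x)).
      apply Rle_trans with (Rabs (x - c) * M + Rabs c * (L * Rabs (x - c))).
      apply Rplus_le_compat. apply Rmult_le_compat_l; auto. apply Rmult_le_compat_l; auto. nra.
Qed.

Lemma cv_abs : forall a l, Un_cv a l -> Un_cv (fun i => Rabs (a i)) (Rabs l).
Proof.
  intros a l H eps He. destruct (H eps He) as [N HN]. exists N. intros. unfold R_dist.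
  eapply Rle_lt_trans. apply Rabs_triang_inv2. apply HN; auto.
Qed.

Lemma rpow_small : forall e v, 0 < e < 1 -> 0 < v <= 1 -> e <= rpow e v.
Proof.
  intros e v He Hv. rewrite rpow_pos_eq by lra.
  replace v with (1 + (v - 1)) by ring. rewrite Rpower_plus, Rpower_1 by lra.
  assert (1 <= Rpower e (v - 1)).
  { assert (Rpower e (v - 1) = Rpower (/ e) (1 - v)).
    { unfold Rpower. rewrite ln_Rinv by lra. f_equal. ring. }
    rewrite H. rewrite <- (Rpower_O (/ e)) at 1. apply Rle_Rpower. 
    rewrite <- Rinv_1. apply Rinv_le_contravar; lra. lra.
    apply Rinv_0_lt_compat; lra. }
  nra.
Qed.

Lemma mu_Q0_R : forall r P, mu_Q0 r P = 0 <-> evalR P (Q2R r) = 0.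
Proof.
  intros. rewrite <- Q2R_evalQ. split.
  - intros H. apply mu_Q0_zero in H. apply Qeq_eqR in H. rewrite H. apply RMicromega.Q2R_0.
  - intros H. apply mu_Q0_0. apply eqR_Qeq. rewrite H. symmetry. apply RMicromega.Q2R_0.
Qed.

Lemma evalQ_lin_V8 : forall m (n : nat) x, (0 < n)%nat ->
  (evalQ (-m :: Z.of_nat n :: nil)%Z x == inject_Z (Z.of_nat n) * (x - frac_Q m n))%Q.
Proof.
  intros. simpl. unfold frac_Q. rewrite inject_Z_opp. field. intro E. rewrite injZ0' in E. lia.
Qed.

Lemma part_f (m : Z) (n : nat) (Hn : (0 < n)%nat) :
  forall (v t : nat -> R),
     (forall i, 0 < v i <= 1) ->
     (sn_conv (fun i => mu_R (v i) (t i)) (mu_Q0 (frac_Q m n)) <->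
      (Un_cv v 0 /\
       Un_cv (fun i => rpow (Rabs (t i - Q2R (frac_Q m n))) (v i)) 0)).
Proof.
  intros v t Hv. set (rr := Q2R (frac_Q m n)).
  assert (Hrr : IZR m = IZR (Z.of_nat n) * rr).
  { unfold rr. rewrite <- Q2R_injZ, <- Q2R_injZ, <- Q2R_mult. apply Qeq_eqR. apply frac_Q_eq; auto. }
  assert (Hn1 : 1 <= IZR (Z.of_nat n)) by (apply IZR_le; lia).
  split.
  - intros H. split.
    + apply Rpower_cv1_inv with 2. lra.
      apply cv_ext with (fun i => mu_R (v i) (t i) (2%Z :: nil)).
      { intros. unfold mu_R. simpl. rewrite Rmult_0_r, Rplus_0_r, Rabs_right by lra. apply rpow_pos_eq. lra. }
      specialize (H (2%Z :: nil)). rewrite mu_Q0_const in H by lia. auto.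
    + specialize (H (-m :: Z.of_nat n :: nil)%Z). rewrite mu_Q0_0 in H.
      2:{ rewrite evalQ_lin_V8 by auto; ring. }
      apply cv_squeeze0 with (fun i => mu_R (v i) (t i) (-m :: Z.of_nat n :: nil)%Z); auto.
      intros i. split. apply rpow_nonneg. unfold mu_R. apply rpow_le. specialize (Hv i); lra.
      split. apply Rabs_pos. simpl. rewrite opp_IZR.
      replace (- IZR m + t i * (IZR (Z.of_nat n) + t i * 0)) with (IZR (Z.of_nat n) * (t i - rr)) by (rewrite Hrr; ring).
      rewrite Rabs_mult. rewrite (Rabs_right (IZR _)) by lra. pose proof (Rabs_pos (t i - rr)). nra.
  - intros [Hv0 Ht].
    assert (Htr : Un_cv t rr).
    { intros eps He. set (e := Rmin eps (1/2)).
      assert (0 < e) by (apply Rmin_pos; lra).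
      destruct (Ht e H) as [N HN]. exists N. intros i Hi. specialize (HN i Hi).
      unfold R_dist in *. rewrite Rminus_0_r, Rabs_right in HN by (apply Rle_ge, rpow_nonneg).
      destruct (Rlt_le_dec (Rabs (t i - rr)) e). pose proof (Rmin_l eps (1/2)). fold e in H0. lra.
      exfalso. pose proof (rpow_le e (Rabs (t i - rr)) (v i) ltac:(specialize (Hv i); lra) ltac:(lra)).
      pose proof (rpow_small e (v i) ltac:(split; auto; pose proof (Rmin_r eps (1/2)); fold e in H1; lra) (Hv i)).
      lra. }
    intros P. destruct (Req_dec (evalR P rr) 0) as [E|E].
    + assert (mu_Q0 (frac_Q m n) P = 0) by (apply mu_Q0_R; auto). rewrite H.
      destruct (evalR_lip P rr) as [_ [L [HL HLb]]].
      apply cv_squeeze with (fun _ => 0) (fun i => rpow L (v i) * rpow (Rabs (t i - rr)) (v i)).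
      * destruct (Htr 1 ltac:(lra)) as [K HK]. exists K. intros i Hi. split. apply rpow_nonneg.
        unfold mu_R. rewrite <- rpow_mult by (try lra; apply Rabs_pos). apply rpow_le. specialize (Hv i); lra.
        split. apply Rabs_pos. specialize (HK i Hi). unfold R_dist in HK.
        rewrite <- (Rminus_0_r (evalR P (t i))). rewrite <- E. apply HLb. lra.
      * apply cv_const.
      * replace 0 with (1 * 0) by ring. apply CV_mult; auto.
        apply cv_ext with (fun i => Rpower L (v i)). intros; rewrite rpow_pos_eq; auto.
        apply Rpower_cv1; auto.
    + assert (mu_Q0 (frac_Q m n) P = 1).
      { destruct (mu_Q0_01 (frac_Q m n) P) as [X|X]; auto. apply mu_Q0_R in X. contradiction. }
      rewrite H. set (a := Rabs (evalR P rr)).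
      assert (Ha : 0 < a) by (apply Rabs_pos_lt; auto).
      pose proof (cv_abs _ _ (evalR_cv P t rr Htr)) as Hc. fold a in Hc.
      apply cv_squeeze with (fun i => Rpower (a / 2) (v i)) (fun i => Rpower (2 * a) (v i)).
      * destruct (cv_gt_eventually _ _ (a / 2) Hc ltac:(lra)) as [K1 H1].
        destruct (cv_lt_eventually _ _ (2 * a) Hc ltac:(lra)) as [K2 H2].
        exists (max K1 K2). intros i Hi. specialize (H1 i ltac:(lia)). specialize (H2 i ltac:(lia)).
        unfold mu_R. rewrite rpow_pos_eq by lra. split; apply Rle_Rpower_l; try (specialize (Hv i); lra); lra.
      * apply Rpower_cv1; auto. lra.
      * apply Rpower_cv1; auto. lra.
Qed.

Open Scope R_scope.

Lemma cv_eventually_ext : forall a b l, (exists K, forall k, (K <= k)%nat -> a k = b k) -> Un_cv a l -> Un_cv b l.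
Proof.
  intros a b l [K HK] H eps He. destruct (H eps He) as [N HN]. exists (max K N). intros.
  rewrite <- HK by lia. apply HN. lia.
Qed.

Lemma cv_le_eventually : forall a b A B, (exists K, forall k, (K <= k)%nat -> a k <= b k) ->
  Un_cv a A -> Un_cv b B -> A <= B.
Proof.
  intros a b A B [K HK] Ha Hb. destruct (Rle_dec A B); auto. exfalso.
  destruct (Ha ((A - B)/2)) as [N1 H1]. lra. destruct (Hb ((A - B)/2)) as [N2 H2]. lra.
  specialize (HK (max K (max N1 N2)) ltac:(lia)). specialize (H1 (max K (max N1 N2)) ltac:(lia)).
  specialize (H2 (max K (max N1 N2)) ltac:(lia)). unfold R_dist in *.
  apply Rabs_def2 in H1. apply Rabs_def2 in H2. lra.
Qed.

Lemma prod_cv0 : forall x y, (forall i, 0 <= x i) -> Un_cv y 1 -> Un_cv (fun i => x i * y i) 0 -> Un_cv x 0.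
Proof.
  intros x y Hx Hy Hxy. apply cv_squeeze with (fun _ => 0) (fun i => 2 * (x i * y i)).
  - destruct (cv_gt_eventually _ _ (1/2) Hy ltac:(lra)) as [K HK]. exists K. intros k Hk.
    specialize (HK k Hk). specialize (Hx k). nra.
  - apply cv_const.
  - replace 0 with (2 * 0) by ring. apply CV_mult; auto. apply cv_const.
Qed.

Lemma prod_cv1 : forall x y, Un_cv y 1 -> Un_cv (fun i => x i * y i) 1 -> Un_cv x 1.
Proof.
  intros x y Hy Hxy eps He.
  destruct (Hy (Rmin (1/2) (eps/4))) as [N1 H1]. apply Rmin_pos; lra.
  destruct (Hxy (eps/4)) as [N2 H2]. lra.
  exists (max N1 N2). intros k Hk. specialize (H1 k ltac:(lia)). specialize (H2 k ltac:(lia)).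
  unfold R_dist in *. pose proof (Rmin_l (1/2) (eps/4)). pose proof (Rmin_r (1/2) (eps/4)).
  apply Rabs_def2 in H1. apply Rabs_def2 in H2. apply Rabs_def1.
  - destruct (Rle_dec (x k) 1). lra. nra.
  - destruct (Rle_dec (x k) 1). nra. lra.
Qed.

Lemma rpow_pow : forall x w L, 0 <= x -> rpow (x ^ L) w = (rpow x w) ^ L.
Proof.
  intros x w L Hx. induction L; simpl. apply rpow_1.
  rewrite rpow_mult; auto. rewrite IHL. auto. apply pow_le; auto.
Qed.

Section P.
Variable p : Z.
Hypothesis Hp : prime p.

Lemma qp_abs_scale : forall c u, padic_cauchy p u -> qp_abs p (fun k => c * u k)%Q = padic_abs p c * qp_abs p u.
Proof.
  intros. rewrite (qp_abs_mul p Hp (fun _ => c) u); auto. rewrite qp_abs_const; auto. apply cauchy_const; auto.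
Qed.

Lemma pa_inv_p : padic_abs p (/ inject_Z p) = IZR p.
Proof.
  pose proof (prime_ge_2 p Hp).
  assert (padic_abs p (inject_Z p * / inject_Z p) = 1).
  { rewrite (pa_compat p Hp _ (inject_Z 1)). apply pa_int_unit; auto. rewrite Z.mod_1_l; lia.
    field. intro E. rewrite injZ0' in E. lia. }
  rewrite pa_mul, pa_p in H0; auto. assert (0 < IZR p) by (apply IZR_lt; lia).
  apply Rmult_eq_reg_l with (/ IZR p). rewrite H0. field. lra. apply Rinv_neq_0_compat. lra.
Qed.

Lemma pa_le1_sum : forall x c, padic_abs p c <= 1 -> padic_abs p (x - c) <= 1 -> padic_abs p x <= 1.
Proof.
  intros. rewrite (pa_compat p Hp x ((x - c) + c)) by ring. eapply Rle_trans. apply pa_ultra; auto.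
  apply Rmax_lub; auto.
Qed.

End P.

Open Scope R_scope.

Lemma d_index : forall q nZ s, prime q -> padic_cauchy q s -> in_n_plus_qZq q nZ s -> forall P,
  ((q | evalZ P nZ)%Z -> qp_abs q (fun k => evalQ P (s k)) <= / IZR q) /\
  (~ (q | evalZ P nZ)%Z -> qp_abs q (fun k => evalQ P (s k)) = 1).
Proof.
  intros q nZ s Hq Hs [z [Hz [Hz1 He]]] P.
  pose proof (prime_ge_2 q Hq) as Hq2.
  assert (Qq : 1 < IZR q) by (apply IZR_lt; lia).
  assert (Qi : / IZR q < 1) by (rewrite <- Rinv_1; apply Rinv_lt_contravar; lra).
  assert (Qi0 : 0 < / IZR q) by (apply Rinv_0_lt_compat; lra).
  assert (Hcz : padic_cauchy q (fun k => inject_Z q * z k)%Q) by (apply cauchy_mul; auto; apply cauchy_const; auto).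
  assert (Hce : padic_cauchy q (fun k => s k - (inject_Z nZ + inject_Z q * z k))%Q).
  { apply (cauchy_add q Hq s (fun k => - (inject_Z nZ + inject_Z q * z k))%Q); auto.
    apply cauchy_opp; auto. apply (cauchy_add q Hq (fun _ => inject_Z nZ)); auto. apply cauchy_const; auto. }
  assert (A : qp_abs q (fun k => s k - inject_Z nZ)%Q <= / IZR q).
  { rewrite (qp_abs_ext q Hq _ (fun k => inject_Z q * z k + (s k - (inject_Z nZ + inject_Z q * z k)))%Q) by (intros; ring).
    eapply Rle_trans. apply qp_abs_ultra; auto. rewrite He.
    rewrite qp_abs_scale, pa_p; auto. apply Rmax_lub. 
    pose proof (qp_abs_nonneg q Hq z Hz). nra. lra. }
  assert (Hcs : padic_cauchy q (fun k => s k - inject_Z nZ)%Q).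
  { apply (cauchy_add q Hq s (fun _ => - inject_Z nZ)%Q); auto. apply cauchy_const; auto. }
  destruct (qp_abs_lt q Hq _ 1 Hcs ltac:(lra)) as [K HK].
  assert (L : forall k, (K <= k)%nat -> padic_abs q (evalQ P (s k) - inject_Z (evalZ P nZ)) <= / IZR q).
  { intros k Hk. specialize (HK k Hk). apply pa_lt1 in HK; auto.
    rewrite (pa_compat q Hq _ (evalQ P (s k) - evalQ P (inject_Z nZ))) by (rewrite evalQ_injZ; reflexivity).
    eapply Rle_trans. apply (poly_lip q Hq P (s k) (inject_Z nZ) 1). lra.
    apply (pa_le1_sum q Hq _ (inject_Z nZ)). apply pa_int_le1; auto. lra. apply pa_int_le1; auto.
    rewrite pow1. lra. }
  split.
  - intros D. apply qp_abs_le; auto. apply cauchy_poly; auto. exists K. intros k Hk.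
    rewrite (pa_compat q Hq _ ((evalQ P (s k) - inject_Z (evalZ P nZ)) + inject_Z (evalZ P nZ))) by ring.
    eapply Rle_trans. apply pa_ultra; auto. apply Rmax_lub. apply L; auto.
    apply pa_int_div; auto. apply Z.mod_divide; auto. lia.
  - intros D. apply qp_abs_eventually; auto. exists K. intros k Hk.
    assert (U : padic_abs q (inject_Z (evalZ P nZ)) = 1).
    { apply pa_int_unit; auto. intro E. apply D. apply Z.mod_divide; auto. lia. }
    rewrite (pa_compat q Hq _ (inject_Z (evalZ P nZ) + (evalQ P (s k) - inject_Z (evalZ P nZ)))) by ring.
    rewrite pa_strict; auto. rewrite U. specialize (L k Hk). lra.
Qed.

Lemma part_d (q : Z) (n : nat) (Hq : prime q) (Hn : (0 < n)%nat) :
  forall (p : nat -> Z) (w : nat -> R) (s : nat -> nat -> Q),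
     (forall i, prime (p i)) -> (forall i, 0 < w i) ->
     (forall i, padic_cauchy (p i) (s i)) ->
     (sn_conv (fun i => mu_Qp (p i) (w i) (s i)) (mu_Fp q (Z.of_nat n)) <->
      (cv_infty w /\
       exists i0, forall i, (i0 <= i)%nat ->
         p i = q /\ in_n_plus_qZq q (Z.of_nat n) (s i))).
Proof.
  intros p w s Hp Hw Hs.
  pose proof (prime_ge_2 q Hq) as Hq2.
  assert (Qq : 1 < IZR q) by (apply IZR_lt; lia).
  assert (Qi : / IZR q < 1) by (rewrite <- Rinv_1; apply Rinv_lt_contravar; lra).
  assert (Qi0 : 0 < / IZR q) by (apply Rinv_0_lt_compat; lra).
  split.
  - intros H.
    pose proof (H (q :: nil)) as H1. rewrite mu_Fp_0 in H1 by (cbn [evalZ]; exists 1%Z; ring).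
    destruct (cv_lt_eventually _ _ 1 H1 ltac:(lra)) as [K1 HK1].
    assert (Pq : forall i, (K1 <= i)%nat -> p i = q).
    { intros i Hi. specialize (HK1 i Hi). simpl in HK1. rewrite mu_Qp_const in HK1; auto.
      destruct (Z.eq_dec (p i) q); auto. exfalso.
      rewrite pa_int_unit, rpow_1 in HK1; auto. lra.
      intro E. apply Z.mod_divide in E. apply prime_div_prime in E; auto.
      pose proof (prime_ge_2 _ (Hp i)); lia. }
    split.
    + apply Rpower_inv_cv0 with (IZR q); auto.
      apply cv_eventually_ext with (fun i => mu_Qp (p i) (w i) (s i) (q :: nil)); auto.
      exists K1. intros k Hk. rewrite mu_Qp_const; auto. rewrite Pq, pa_p; auto.
    + pose proof (H (- Z.of_nat n :: 1 :: nil)%Z) as H2.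
      rewrite mu_Fp_0 in H2 by (cbn [evalZ]; exists 0%Z; ring).
      destruct (cv_lt_eventually _ _ 1 H2 ltac:(lra)) as [K2 HK2].
      exists (max K1 K2). intros i Hi. specialize (Pq i ltac:(lia)). split; auto.
      specialize (HK2 i ltac:(lia)). simpl in HK2. unfold mu_Qp in HK2. rewrite <- (rpow_1 (w i)) in HK2.
      rewrite Pq in HK2. 
      set (u := fun k => (s i k - inject_Z (Z.of_nat n))%Q).
      assert (Hcs : padic_cauchy q u).
      { apply (cauchy_add q Hq (s i) (fun _ => - inject_Z (Z.of_nat n))%Q); auto. rewrite <- Pq; auto.
        apply cauchy_const; auto. }
      rewrite (qp_abs_ext q Hq _ u) in HK2 by (intros; unfold u; simpl; rewrite ?inject_Z_opp; ring).
      apply rpow_lt_inv in HK2; auto; [|apply qp_abs_nonneg; auto|lra].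
      assert (Nu : qp_abs q u <= / IZR q).
      { apply qp_abs_le; auto. destruct (qp_abs_lt q Hq u 1 Hcs HK2) as [K HK]. exists K.
        intros. apply pa_lt1; auto. }
      set (z := fun k => (u k * / inject_Z q)%Q).
      assert (Hz : padic_cauchy q z) by (apply cauchy_mul; auto; apply cauchy_const; auto).
      exists z. split; auto. split.
      * unfold z. rewrite qp_abs_mul, qp_abs_const, pa_inv_p; auto. 
        apply Rle_trans with (/ IZR q * IZR q). apply Rmult_le_compat_r; lra. right; field; lra.
        apply cauchy_const; auto.
      * rewrite (qp_abs_ext q Hq _ (fun _ => 0%Q)). rewrite qp_abs_const, pa_zero; auto. reflexivity.
        intros. unfold z, u. field. intro E. rewrite injZ0' in E. lia.
  - intros [Hinf [i0 Hi0]] P.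
    destruct (Zdivide_dec q (evalZ P (Z.of_nat n))) as [D|D].
    + rewrite mu_Fp_0 by auto. 
      apply cv_squeeze with (fun _ => 0) (fun i => rpow (/ IZR q) (w i)).
      * exists i0. intros i Hi. destruct (Hi0 i Hi) as [Ep Hin]. split. apply rpow_nonneg.
        unfold mu_Qp. rewrite Ep. apply rpow_le. specialize (Hw i); lra. split.
        apply qp_abs_nonneg; auto. apply cauchy_poly; auto. rewrite <- Ep; auto.
        apply (d_index q (Z.of_nat n) (s i) Hq); auto. rewrite <- Ep; auto.
      * apply cv_const.
      * apply Rpower_inv_cv0; auto.
    + rewrite mu_Fp_1 by (auto; lia). apply cv_eventually_const. exists i0. intros i Hi.
      destruct (Hi0 i Hi) as [Ep Hin]. unfold mu_Qp. rewrite Ep.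
      rewrite (proj2 (d_index q (Z.of_nat n) (s i) Hq ltac:(rewrite <- Ep; auto) Hin P)); auto.
      apply rpow_1.
Qed.

Open Scope R_scope.

Lemma evalQ_lin_g : forall m (n : nat) x, (0 < n)%nat ->
  (evalQ (-m :: Z.of_nat n :: nil)%Z x == inject_Z (Z.of_nat n) * (x - frac_Q m n))%Q.
Proof.
  intros. simpl. unfold frac_Q. rewrite inject_Z_opp. field. intro E. rewrite injZ0' in E. lia.
Qed.

Lemma part_g (m : Z) (n : nat) (Hn : (0 < n)%nat) :
  forall (p : nat -> Z) (w : nat -> R) (s : nat -> nat -> Q),
     (forall i, prime (p i)) -> (forall i, 0 < w i) ->
     (forall i, padic_cauchy (p i) (s i)) ->
     (sn_conv (fun i => mu_Qp (p i) (w i) (s i)) (mu_Q0 (frac_Q m n)) <->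
      ((forall k : nat, (0 < k)%nat ->
          Un_cv (fun i => rpow (padic_abs (p i) (inject_Z (Z.of_nat k))) (w i)) 1) /\
       Un_cv (fun i => rpow (qp_abs (p i) (fun j => s i j - frac_Q m n)%Q) (w i)) 0)).
Proof.
  intros p w s Hp Hw Hs. set (r := frac_Q m n).
  assert (Hsr : forall i, padic_cauchy (p i) (fun j => s i j - r)%Q).
  { intros. apply (cauchy_add (p i) (Hp i) (s i) (fun _ => - r)%Q); auto. apply cauchy_const; auto. }
  split.
  - intros H. assert (K : forall k : nat, (0 < k)%nat ->
          Un_cv (fun i => rpow (padic_abs (p i) (inject_Z (Z.of_nat k))) (w i)) 1).
    { intros k Hk. specialize (H (Z.of_nat k :: nil)). rewrite mu_Q0_const in H by lia.
      apply cv_ext with (fun i => mu_Qp (p i) (w i) (s i) (Z.of_nat k :: nil)); auto.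
      intros. apply mu_Qp_const; auto. }
    split; auto.
    specialize (H (- m :: Z.of_nat n :: nil)%Z). rewrite mu_Q0_0 in H.
    2:{ rewrite evalQ_lin_g by auto. unfold r. ring. }
    apply prod_cv0 with (fun i => rpow (padic_abs (p i) (inject_Z (Z.of_nat n))) (w i)).
    intros; apply rpow_nonneg. apply K; auto.
    apply cv_ext with (fun i => mu_Qp (p i) (w i) (s i) (- m :: Z.of_nat n :: nil)%Z); auto.
    intros i. unfold mu_Qp. rewrite (qp_abs_ext (p i) (Hp i) _ (fun j => inject_Z (Z.of_nat n) * (s i j - r))%Q).
    rewrite qp_abs_scale; auto. rewrite rpow_mult. ring. apply pa_nonneg; auto.
    apply qp_abs_nonneg; auto. intros. apply evalQ_lin_g; auto.
  - intros [Hk Ha] P.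
    assert (Z1 : forall z, z <> 0%Z -> Un_cv (fun i => rpow (padic_abs (p i) (inject_Z z)) (w i)) 1).
    { intros z Hz. destruct (Z_le_gt_dec 0 z).
      - replace z with (Z.of_nat (Z.to_nat z)) by lia. apply Hk. lia.
      - apply cv_ext with (fun i => rpow (padic_abs (p i) (inject_Z (Z.of_nat (Z.to_nat (- z))))) (w i)).
        intros. rewrite Z2Nat.id by lia. rewrite inject_Z_opp, pa_opp; auto. apply Hk. lia. }
    assert (R1 : exists K, forall i, (K <= i)%nat -> rpow (padic_abs (p i) r) (w i) <= 2).
    { destruct (Z.eq_dec m 0) as [Em|Em].
      - exists O. intros. rewrite pa_zero. rewrite rpow_0. lra. unfold r, frac_Q. rewrite Em. reflexivity.
      - assert (Un_cv (fun i => rpow (padic_abs (p i) r) (w i)) 1).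
        { apply prod_cv1 with (fun i => rpow (padic_abs (p i) (inject_Z (Z.of_nat n))) (w i)).
          apply Z1; lia. apply cv_ext with (fun i => rpow (padic_abs (p i) (inject_Z m)) (w i)).
          intros. rewrite <- rpow_mult by (apply pa_nonneg; auto). rewrite <- pa_mul; auto.
          f_equal. apply pa_compat; auto. rewrite (frac_Q_eq m n Hn). fold r. ring. apply Z1; auto. }
        destruct (cv_lt_eventually _ _ 2 H ltac:(lra)) as [K HK]. exists K. intros. left; auto. }
    destruct R1 as [K1 HK1].
    set (a := fun i => qp_abs (p i) (fun j => s i j - r)%Q).
    set (C := fun i => Rmax 1 (padic_abs (p i) r)).
    set (L := length P).
    set (D := fun i => qp_abs (p i) (fun j => evalQ P (s i j) - evalQ P r)%Q).
    assert (HcD : forall i, padic_cauchy (p i) (fun j => evalQ P (s i j) - evalQ P r)%Q).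
    { intros. apply (cauchy_add (p i) (Hp i) _ (fun _ => - evalQ P r)%Q). apply cauchy_poly; auto. apply cauchy_const; auto. }
    assert (DC : forall i, a i < 1 -> D i <= C i ^ L * a i).
    { intros i Hai. destruct (qp_abs_lt (p i) (Hp i) _ 1 (Hsr i) Hai) as [J HJ].
      assert (HC1 : 1 <= C i) by apply Rmax_l. assert (HCr : padic_abs (p i) r <= C i) by apply Rmax_r.
      apply cv_le_eventually with (fun j => padic_abs (p i) (evalQ P (s i j) - evalQ P r)) (fun j => C i ^ L * padic_abs (p i) (s i j - r)).
      - exists J. intros j Hj. apply poly_lip; auto. 
        rewrite (pa_compat (p i) (Hp i) (s i j) ((s i j - r) + r)) by ring. eapply Rle_trans. apply pa_ultra; auto.
        apply Rmax_lub; auto. specialize (HJ j Hj). lra.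
      - apply cauchy_abs_cv; auto.
      - apply CV_mult. apply cv_const. apply cauchy_abs_cv; auto. }
    assert (DV : Un_cv (fun i => rpow (D i) (w i)) 0).
    { destruct (cv_lt_eventually _ _ 1 Ha ltac:(lra)) as [K2 HK2].
      apply cv_squeeze with (fun _ => 0) (fun i => 2 ^ L * rpow (a i) (w i)).
      - exists (max K1 K2). intros i Hi. split. apply rpow_nonneg.
        specialize (HK2 i ltac:(lia)). specialize (HK1 i ltac:(lia)).
        assert (Hai : a i < 1). { fold a in HK2. rewrite <- (rpow_1 (w i)) in HK2.
          apply rpow_lt_inv in HK2; auto. apply qp_abs_nonneg; auto. lra. }
        assert (0 <= a i) by (apply qp_abs_nonneg; auto).
        assert (1 <= C i) by apply Rmax_l.
        eapply Rle_trans. apply rpow_le. specialize (Hw i); lra. split. apply qp_abs_nonneg; auto. apply DC; auto.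
        rewrite rpow_mult, rpow_pow by (try apply pow_le; lra).
        apply Rmult_le_compat_r. apply rpow_nonneg. apply pow_incr. split. apply rpow_nonneg.
        unfold C, Rmax. destruct (Rle_dec 1 (padic_abs (p i) r)). auto. rewrite rpow_1. lra.
      - apply cv_const.
      - replace 0 with (2 ^ L * 0) by ring. apply CV_mult. apply cv_const. auto. }
    destruct (Qeq_dec (evalQ P r) 0) as [E|E].
    + rewrite mu_Q0_0 by auto.
      apply cv_ext with (fun i => rpow (D i) (w i)); auto. intros i. unfold mu_Qp, D. f_equal.
      apply qp_abs_ext; auto. intros j. rewrite E. ring.
    + rewrite mu_Q0_1 by auto.
      set (b := fun i => padic_abs (p i) (evalQ P r)).
      assert (Hb : Un_cv (fun i => rpow (b i) (w i)) 1).
      { set (h := hom m (Z.of_nat n) P).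
        assert (Hh : h <> 0%Z).
        { intro Z0. apply E. assert (inject_Z h == 0)%Q by (rewrite Z0; reflexivity).
          unfold h in H. rewrite hom_Q in H by lia. apply Qmult_integral in H. destruct H; auto.
          rewrite injZ0' in H. exfalso. revert H. apply Z.pow_nonzero; lia. }
        apply prod_cv1 with (fun i => rpow (padic_abs (p i) (inject_Z (Z.of_nat n ^ Z.of_nat L))) (w i)).
        apply Z1. apply Z.pow_nonzero; lia.
        apply cv_ext with (fun i => rpow (padic_abs (p i) (inject_Z h)) (w i)); [|apply Z1; auto].
        intros i. unfold b. rewrite <- rpow_mult by (apply pa_nonneg; auto). rewrite <- pa_mul by auto.
        f_equal. apply pa_compat; auto. unfold h. rewrite hom_Q by lia. unfold r, frac_Q, L. ring. }
      apply cv_eventually_ext with (fun i => rpow (b i) (w i)); auto.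
      destruct (cv_lt_eventually _ _ (1/2) DV ltac:(lra)) as [K2 HK2].
      destruct (cv_gt_eventually _ _ (1/2) Hb ltac:(lra)) as [K3 HK3].
      exists (max K2 K3). intros i Hi. specialize (HK2 i ltac:(lia)). specialize (HK3 i ltac:(lia)).
      assert (Db : D i < b i).
      { apply rpow_lt_inv with (w i); auto. apply qp_abs_nonneg; auto. apply pa_nonneg; auto. lra. }
      unfold mu_Qp. f_equal. symmetry. apply qp_abs_eventually; auto.
      destruct (qp_abs_lt (p i) (Hp i) _ (b i) (HcD i) Db) as [J HJ]. exists J. intros j Hj.
      rewrite (pa_compat (p i) (Hp i) _ (evalQ P r + (evalQ P (s i j) - evalQ P r))) by ring.
      apply pa_strict; auto.
Qed.

Open Scope R_scope.
Theorem theorem3p8 (q m : Z) (n : nat)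
  (Hq : prime q) (Hn : (0 < n)%nat) (Hgcd : Z.gcd m (Z.of_nat n) = 1%Z) :
  (* (b) *)
  (open_in_Amin U_R /\ open_in_Amin (U_Qp q) /\
   open_in_Amin (fun f => Fp_pts q f \/ U_Qp q f)) /\
  (* (c) *)
  (discrete_subspace Q0_pts /\
   discrete_subspace (fun f => exists p, prime p /\ Fp_pts p f)) /\
  (* (d) *)
  (forall (p : nat -> Z) (w : nat -> R) (s : nat -> nat -> Q),
     (forall i, prime (p i)) -> (forall i, 0 < w i) ->
     (forall i, padic_cauchy (p i) (s i)) ->
     (sn_conv (fun i => mu_Qp (p i) (w i) (s i)) (mu_Fp q (Z.of_nat n)) <->
      (cv_infty w /\
       exists i0, forall i, (i0 <= i)%nat ->
         p i = q /\ in_n_plus_qZq q (Z.of_nat n) (s i)))) /\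
  (* (e) *)
  (forall (p : nat -> Z) (k : nat -> Z),
     (forall i, prime (p i)) ->
     (sn_conv (fun i => mu_Fp (p i) (k i)) (mu_Q0 (frac_Q m n)) <->
      (cv_infty (fun i => IZR (p i)) /\
       exists i0, forall i, (i0 <= i)%nat ->
         ~ (p i | Z.of_nat n)%Z /\ (p i | Z.of_nat n * k i - m)%Z))) /\
  (* (f) *)
  (forall (v t : nat -> R),
     (forall i, 0 < v i <= 1) ->
     (sn_conv (fun i => mu_R (v i) (t i)) (mu_Q0 (frac_Q m n)) <->
      (Un_cv v 0 /\
       Un_cv (fun i => rpow (Rabs (t i - Q2R (frac_Q m n))) (v i)) 0))) /\
  (* (g) *)
  (forall (p : nat -> Z) (w : nat -> R) (s : nat -> nat -> Q),
     (forall i, prime (p i)) -> (forall i, 0 < w i) ->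
     (forall i, padic_cauchy (p i) (s i)) ->
     (sn_conv (fun i => mu_Qp (p i) (w i) (s i)) (mu_Q0 (frac_Q m n)) <->
      ((forall k : nat, (0 < k)%nat ->
          Un_cv (fun i => rpow (padic_abs (p i) (inject_Z (Z.of_nat k))) (w i)) 1) /\
       Un_cv (fun i => rpow (qp_abs (p i) (fun j => s i j - frac_Q m n)%Q) (w i)) 0))).

Proof.
  split; [split; [apply part_b1|split; [apply part_b2; auto|apply part_b3; auto]]|].
  split; [split; [apply part_c1|apply part_c2]|].
  split; [intros; apply part_d; auto|].
  split; [intros; apply part_e; auto|].
  split; [intros; apply part_f; auto|].
  intros; apply part_g; auto.
Qed.
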